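(* Let $(p_j)_{j\ge1}$, with $p_j\in[0,1]$ and $\sum_j p_j<\infty$, be regularly varying with index $\alpha\in(0,1)$ and slowly varying function $\ell$. Then for every fixed $r\ge1$, as $n\to+\infty$, $$\mathbb{E}[K_{n,r}]\simeq \frac{\alpha\,\Gamma(r-\alpha)}{r!}\,n^\alpha\ell(n),$$ where $\Gamma$ is the Gamma function and $f\simeq g$ means $f/g\to1$.
   Context: Bernoulli product feature model: observations $Y_1,Y_2,\dots$ are i.i.d., each $Y_i=(Y_{i,j})_{j\ge1}$ a sequence of independent Bernoulli$(p_j)$ random variables; $X_{n,j}=\sum_{i=1}^nY_{i,j}$, and $K_{n,r}=\sum_{j\ge1}\mathbf{1}\{X_{n,j}=r\}$. Regular variation: let $\overline{\nu}(x):=\#\{j\ge1: p_j\ge x\}$ for $x\in(0,1]$. The sequence $(p_j)$ is regularly varying with index $\alpha\in(0,1)$ if $\overline{\nu}(x)\simeq x^{-\alpha}\ell(1/x)$ as $x\downarrow0$, where $\ell$ is slowly varying, i.e. $\ell(ct)/\ell(t)\to1$ as $t\to+\infty$ for every $c>0$. *)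

(* Defs.v *)
From Stdlib Require Import Reals Lra Arith.
Open Scope R_scope.

(* Features are indexed by j : nat starting at 0 (p 0 plays the role of p_1). *)

Fixpoint cnt (p : nat -> R) (x : R) (M : nat) : nat :=
  match M with
  | O => O
  | S m => (cnt p x m + (if Rle_dec x (p m) then 1 else 0))%nat
  end.

(* nubar(x) = #{ j : p_j >= x } equals N (N is well defined when only finitely
   many p_j are >= x, e.g. when sum p_j < oo and x > 0). *)
Definition nubar_is (p : nat -> R) (x : R) (N : nat) : Prop :=
  exists M : nat, (forall j, (M <= j)%nat -> p j < x) /\ cnt p x M = N.

Definition slowly_varying (l : R -> R) : Prop :=
  forall c, 0 < c -> forall eps, 0 < eps -> exists T, forall t, T < t ->
    Rabs (l (c * t) / l t - 1) < eps.

Definition regularly_varying (p : nat -> R) (alpha : R) (l : R -> R) : Prop :=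
  slowly_varying l /\
  forall eps, 0 < eps -> exists d, 0 < d /\ forall x, 0 < x < d ->
    forall N, nubar_is p x N ->
      Rabs (INR N / (Rpower x (- alpha) * l (1 / x)) - 1) < eps.

Definition is_Gamma (s g : R) : Prop :=
  forall eps, 0 < eps -> exists d, 0 < d /\ exists M, 0 < M /\
    forall a b, 0 < a -> a < d -> M < b -> a < b ->
      exists pr : Riemann_integrable (fun t => Rpower t (s - 1) * exp (- t)) a b,
        Rabs (RiemannInt pr - g) < eps.

(* E[1{X_{n,j} = r}] = P(Binomial(n, p_j) = r) *)
Definition binom_pmf (n r : nat) (q : R) : R :=
  if (r <=? n)%nat then C n r * q ^ r * (1 - q) ^ (n - r) else 0.

(* Main.v *)
Require Import Defs.
From Stdlib Require Import Reals Arith.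
Open Scope R_scope.
From Stdlib Require Import Lra Lia ClassicalEpsilon.
From Coquelicot Require Import Coquelicot.
Open Scope R_scope.


Definition Ind (x q : R) : R := if Rle_dec x q then 1 else 0.

Fixpoint ssum (f : nat -> R) (M : nat) : R :=
  match M with O => 0 | S m => ssum f m + f m end.

Lemma Ind_01 x q : 0 <= Ind x q <= 1.
Proof. unfold Ind; destruct Rle_dec; lra. Qed.

Lemma cnt_INR p x M : INR (cnt p x M) = ssum (fun j => Ind x (p j)) M.
Proof.
  induction M; simpl; [reflexivity|].
  rewrite plus_INR, IHM. unfold Ind; destruct Rle_dec; simpl; lra.
Qed.

Lemma ssum_plus f g M : ssum (fun j => f j + g j) M = ssum f M + ssum g M.
Proof. induction M; simpl; lra. Qed.

Lemma ssum_scal k f M : ssum (fun j => k * f j) M = k * ssum f M.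
Proof. induction M; simpl; [ring|rewrite IHM; ring]. Qed.

Lemma ssum_minus f g M : ssum (fun j => f j - g j) M = ssum f M - ssum g M.
Proof. induction M; simpl; lra. Qed.

Lemma ssum_le f g M : (forall j, (j < M)%nat -> f j <= g j) -> ssum f M <= ssum g M.
Proof.
  induction M; simpl; intros H; [lra|].
  assert (ssum f M <= ssum g M) by (apply IHM; intros; apply H; lia).
  assert (f M <= g M) by (apply H; lia). lra.
Qed.

Lemma ssum_ext f g M : (forall j, (j < M)%nat -> f j = g j) -> ssum f M = ssum g M.
Proof.
  induction M; simpl; intros H; [lra|].
  rewrite IHM by (intros; apply H; lia). rewrite H by lia. lra.
Qed.

Lemma ssum_nonneg f M : (forall j, (j < M)%nat -> 0 <= f j) -> 0 <= ssum f M.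
Proof.
  intros H. replace 0 with (ssum (fun _ => 0) M).
  - apply ssum_le; auto.
  - induction M; simpl; [lra|]. rewrite IHM; [lra|]. intros; apply H; lia.
Qed.

Lemma ssum_swap (F : nat -> nat -> R) m M :
  ssum (fun j => ssum (fun i => F i j) m) M = ssum (fun i => ssum (fun j => F i j) M) m.
Proof.
  induction M; simpl.
  - induction m; simpl; lra.
  - rewrite IHM. rewrite <- ssum_plus. reflexivity.
Qed.

Lemma ssum_const k M : ssum (fun _ => k) M = INR M * k.
Proof. induction M; simpl; [ring|]. rewrite IHM. destruct M; simpl; ring. Qed.

Lemma ssum_mono_M f M M' : (forall j, 0 <= f j) -> (M <= M')%nat -> ssum f M <= ssum f M'.
Proof.
  intros H HM. induction HM; [lra|]. simpl. specialize (H m). lra.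
Qed.

Lemma sum_f_R0_ssum f N : sum_f_R0 f N = ssum f (S N).
Proof. induction N; simpl; [lra|]. rewrite IHN. simpl. lra. Qed.

Lemma cnt_mono_M p x M M' : (M <= M')%nat -> (cnt p x M <= cnt p x M')%nat.
Proof. intros H; induction H; simpl; lia. Qed.

Lemma cnt_stable p x M M' : (forall j, (M <= j)%nat -> p j < x) -> (M <= M')%nat ->
  cnt p x M' = cnt p x M.
Proof.
  intros H HM; induction HM; simpl; [reflexivity|].
  rewrite IHHM. destruct Rle_dec as [h|h]; [|lia].
  specialize (H m HM). lra.
Qed.

Lemma cnt_anti p x y M : x <= y -> (cnt p y M <= cnt p x M)%nat.
Proof.
  intros Hxy; induction M; simpl; [lia|].
  destruct (Rle_dec y (p M)); destruct (Rle_dec x (p M)); try lia. lra.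
Qed.

Lemma p_small (p : nat -> R) : (exists S, infinite_sum p S) ->
  forall x, 0 < x -> exists M, forall j, (M <= j)%nat -> p j < x.
Proof.
  intros [Sm HS] x Hx. destruct (HS (x/2)) as [N HN]; [lra|].
  exists (S N). intros j Hj. destruct j; [lia|].
  assert (h1 := HN (S j) ltac:(lia)). assert (h2 := HN j ltac:(lia)).
  unfold R_dist in *. simpl in h1.
  apply Rabs_def2 in h1. apply Rabs_def2 in h2. lra.
Qed.

Lemma Mf_exists (p : nat -> R) : (exists S, infinite_sum p S) ->
  exists Mf : R -> nat, forall x, 0 < x -> forall j, (Mf x <= j)%nat -> p j < x.
Proof.
  intros H.
  assert (H' : forall x, exists M, 0 < x -> forall j, (M <= j)%nat -> p j < x).
  { intros x. destruct (Rlt_dec 0 x) as [h|h].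
    - destruct (p_small p H x h) as [M HM]. exists M; auto.
    - exists O. intros; lra. }
  exists (fun x => proj1_sig (constructive_indefinite_description _ (H' x))).
  intros x Hx. destruct (constructive_indefinite_description _ (H' x)) as [M HM]. simpl. auto.
Qed.

Lemma pow_le1 x n : 0 <= x <= 1 -> x ^ n <= 1.
Proof. intros h. rewrite <- (pow1 n). apply pow_incr; lra. Qed.


Definition nbf (p : nat -> R) (Mf : R -> nat) x := INR (cnt p x (Mf x)).

Definition MfOK (p : nat -> R) (Mf : R -> nat) :=
  forall x, 0 < x -> forall j, (Mf x <= j)%nat -> p j < x.

Lemma cnt_eq_nb p Mf x M : MfOK p Mf -> 0 < x -> (forall j, (M <= j)%nat -> p j < x) ->
  INR (cnt p x M) = nbf p Mf x.
Proof.
  intros HM hx H. unfold nbf.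
  rewrite <- (cnt_stable p x M (Nat.max M (Mf x))) by (auto; lia).
  rewrite <- (cnt_stable p x (Mf x) (Nat.max M (Mf x))) by (auto; lia).
  reflexivity.
Qed.

Lemma cnt_le_nb p Mf x M : MfOK p Mf -> 0 < x -> INR (cnt p x M) <= nbf p Mf x.
Proof.
  intros HM hx. unfold nbf.
  rewrite <- (cnt_stable p x (Mf x) (Nat.max M (Mf x))) by (auto; lia).
  apply le_INR, cnt_mono_M; lia.
Qed.

Lemma nb_anti p Mf x y : MfOK p Mf -> 0 < x <= y -> nbf p Mf y <= nbf p Mf x.
Proof.
  intros HM hxy.
  rewrite <- (cnt_eq_nb p Mf y (Nat.max (Mf x) (Mf y))); auto; try lra.
  2:{ intros j hj. apply HM; [lra|lia]. }
  rewrite <- (cnt_eq_nb p Mf x (Nat.max (Mf x) (Mf y))); auto; try lra.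
  2:{ intros j hj. apply HM; [lra|lia]. }
  apply le_INR, cnt_anti; lra.
Qed.

Lemma nb_nonneg p Mf x : 0 <= nbf p Mf x.
Proof. apply pos_INR. Qed.

Lemma nb_nubar p Mf x : MfOK p Mf -> 0 < x -> nubar_is p x (cnt p x (Mf x)).
Proof. intros HM hx. exists (Mf x). split; auto. Qed.

Lemma exp_pow x n : exp x ^ n = exp (INR n * x).
Proof.
  induction n; simpl. rewrite Rmult_0_l, exp_0; reflexivity.
  rewrite IHn, <- exp_plus. f_equal. destruct n; simpl; ring.
Qed.

Lemma exp_ge_pow y K : 0 <= y -> (1 <= K)%nat -> (y / INR K) ^ K <= exp y.
Proof.
  intros hy hK. assert (hK' : 0 < INR K) by (apply lt_0_INR; lia).
  replace (exp y) with (exp (y / INR K) ^ K).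
  2:{ rewrite exp_pow. f_equal. field. lra. }
  apply pow_incr. split. apply Rmult_le_pos; [lra| left; apply Rinv_0_lt_compat; lra].
  generalize (exp_ineq1_le (y / INR K)). intros. lra.
Qed.

Lemma bernoulli y n : -1 <= y -> 1 + INR n * y <= (1 + y) ^ n.
Proof.
  intros hy. induction n; [simpl; lra|].
  rewrite S_INR. change ((1+y)^(S n)) with ((1+y)*(1+y)^n). assert (0 <= INR n) by apply pos_INR.
  assert (0 <= 1 + y) by lra.
  assert ((1 + y) * (1 + INR n * y) <= (1 + y) * (1 + y) ^ n) by (apply Rmult_le_compat_l; lra).
  assert (0 <= INR n * y * y) by (rewrite Rmult_assoc; apply Rmult_le_pos; [lra| apply Rle_0_sqr]).
  nra.
Qed.

Lemma one_minus_le_exp q : 1 - q <= exp (- q).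
Proof. generalize (exp_ineq1_le (-q)); lra. Qed.

Lemma one_minus_ge q : q <= 1 -> exp (- q) * (1 - q ^ 2) <= 1 - q.
Proof.
  intros hq. generalize (exp_ineq1_le q); intros h.
  assert (he : exp (-q) * exp q = 1) by (rewrite <- exp_plus; replace (-q+q) with 0 by ring; apply exp_0).
  assert (0 < exp (-q)) by apply exp_pos.
  assert (exp (-q) * ((1 + q) * (1 - q)) <= exp (-q) * (exp q * (1 - q))).
  { apply Rmult_le_compat_l; [lra|]. apply Rmult_le_compat_r; lra. }
  replace (exp (-q) * (exp q * (1 - q))) with (1 - q) in H0 by (rewrite <- Rmult_assoc, he; ring).
  simpl. nra.
Qed.

Lemma falling k r : INR k ^ r <= INR (fact (k + r)) / INR (fact k) <= INR (k + r) ^ r.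
Proof.
  assert (hk : 0 < INR (fact k)) by (apply lt_0_INR, lt_O_fact).
  induction r.
  - rewrite Nat.add_0_r. simpl. split; right; field; lra.
  - replace (k + S r)%nat with (S (k + r)) by lia.
    rewrite fact_simpl, mult_INR.
    replace (INR (S (k + r)) * INR (fact (k + r)) / INR (fact k))
      with (INR (S (k + r)) * (INR (fact (k + r)) / INR (fact k))) by (field; lra).
    destruct IHr as [h1 h2].
    change (INR k ^ S r) with (INR k * INR k ^ r).
    change (INR (S (k+r)) ^ S r) with (INR (S (k+r)) * INR (S (k+r)) ^ r).
    assert (0 <= INR k) by apply pos_INR.
    assert (INR k <= INR (S (k + r))) by (apply le_INR; lia).
    assert (INR (k + r) <= INR (S (k + r))) by (apply le_INR; lia).
    assert (0 <= INR k ^ r) by (apply pow_le; lra).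
    split.
    + apply Rmult_le_compat; auto.
    + apply Rmult_le_compat_l; [lra|]. eapply Rle_trans; [exact h2|].
      apply pow_incr. split; [apply pos_INR|lra].
Qed.


Lemma binom_kr k r q : binom_pmf (k+r) r q =
  (INR (fact (k+r)) / INR (fact k)) / INR (fact r) * q ^ r * (1 - q) ^ k.
Proof.
  unfold binom_pmf. rewrite (proj2 (Nat.leb_le r (k+r))) by lia.
  replace (k+r-r)%nat with k by lia. unfold Binomial.C.
  replace (k+r-r)%nat with k by lia. f_equal. f_equal.
  assert (INR (fact k) <> 0) by apply INR_fact_neq_0.
  assert (INR (fact r) <> 0) by apply INR_fact_neq_0.
  field; auto.
Qed.

Lemma binom_nonneg n r q : 0 <= q <= 1 -> 0 <= binom_pmf n r q.
Proof.
  intros hq. unfold binom_pmf. destruct (r <=? n)%nat; [|lra].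
  unfold Binomial.C.
  assert (0 < INR (fact n)) by (apply lt_0_INR, lt_O_fact).
  assert (0 < INR (fact r)) by (apply lt_0_INR, lt_O_fact).
  assert (0 < INR (fact (n-r))) by (apply lt_0_INR, lt_O_fact).
  apply Rmult_le_pos; [apply Rmult_le_pos|apply pow_le; lra].
  - left; apply Rdiv_lt_0_compat; [lra| apply Rmult_lt_0_compat; lra].
  - apply pow_le; lra.
Qed.

Lemma binom_small n r q : (n < r)%nat -> binom_pmf n r q = 0.
Proof.
  intros h. unfold binom_pmf. replace (r <=? n)%nat with false; [reflexivity|].
  symmetry; apply Nat.leb_gt; lia.
Qed.

Lemma binom_upper k r q : 0 <= q <= 1 ->
  binom_pmf (k+r) r q <= (INR (k+r) * q) ^ r / INR (fact r) * exp (- (q * INR k)).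
Proof.
  intros hq. rewrite binom_kr.
  destruct (falling k r) as [_ h2].
  assert (0 < INR (fact r)) by (apply lt_0_INR, lt_O_fact).
  assert (0 <= INR (fact (k + r)) / INR (fact k)).
  { apply Rdiv_le_0_compat; apply pos_INR || (apply lt_0_INR, lt_O_fact). }
  assert (h3 : (1 - q) ^ k <= exp (- (q * INR k))).
  { replace (- (q * INR k)) with (INR k * (-q)) by ring. rewrite <- exp_pow.
    apply pow_incr. generalize (one_minus_le_exp q); lra. }
  rewrite Rpow_mult_distr.
  assert (0 <= q ^ r) by (apply pow_le; lra).
  assert (0 <= (1-q) ^ k) by (apply pow_le; lra).
  set (F := INR (fact (k + r)) / INR (fact k)) in *. clearbody F.
  assert (0 < / INR (fact r)) by (apply Rinv_0_lt_compat; lra).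
  replace (INR (k + r) ^ r * q ^ r / INR (fact r) * exp (- (q * INR k)))
    with ((INR (k + r) ^ r / INR (fact r) * q ^ r) * exp (- (q * INR k))) by (unfold Rdiv; ring).
  apply Rmult_le_compat; try lra.
  - unfold Rdiv; repeat apply Rmult_le_pos; lra.
  - apply Rmult_le_compat_r; [lra|]. unfold Rdiv. apply Rmult_le_compat_r; lra.
Qed.

Lemma binom_lower k r q : 0 <= q <= 1 ->
  (INR k * q) ^ r / INR (fact r) * (exp (- (INR (k+r) * q)) * (1 - INR (k+r) * q ^ 2))
  <= binom_pmf (k+r) r q.
Proof.
  intros hq. rewrite binom_kr.
  destruct (falling k r) as [h1 _].
  assert (0 < INR (fact r)) by (apply lt_0_INR, lt_O_fact).
  assert (hA : exp (- (INR (k+r) * q)) * (1 - INR (k+r) * q ^ 2) <= (1 - q) ^ k).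
  { assert (e1 : (1 - q) ^ (k + r) <= (1 - q) ^ k).
    { rewrite pow_add. assert (0 <= (1-q)^k) by (apply pow_le; lra).
      assert ((1-q)^r <= 1) by (apply pow_le1; lra). nra. }
    assert (e2 : (exp (-q) * (1 - q^2)) ^ (k + r) <= (1 - q) ^ (k + r)).
    { apply pow_incr. split; [|apply one_minus_ge; lra].
      apply Rmult_le_pos; [left; apply exp_pos| simpl; nra]. }
    rewrite Rpow_mult_distr, exp_pow in e2.
    assert (e3 : 1 + INR (k+r) * (- q^2) <= (1 + - q^2) ^ (k + r)) by (apply bernoulli; simpl; nra).
    assert (0 < exp (INR (k + r) * - q)) by apply exp_pos.
    replace (- (INR (k+r) * q)) with (INR (k + r) * - q) by ring.
    assert (exp (INR (k + r) * - q) * (1 + INR (k+r) * (- q^2)) <= exp (INR (k + r) * - q) * (1 + - q^2) ^ (k + r))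
      by (apply Rmult_le_compat_l; lra).
    replace (1 - q^2) with (1 + - q^2) in e2 by ring. lra. }
  rewrite Rpow_mult_distr.
  assert (0 <= q ^ r) by (apply pow_le; lra).
  assert (0 <= INR k ^ r) by (apply pow_le, pos_INR).
  assert (0 < / INR (fact r)) by (apply Rinv_0_lt_compat; lra).
  assert (0 <= (1-q) ^ k) by (apply pow_le; lra).
  set (F := INR (fact (k + r)) / INR (fact k)) in *. clearbody F.
  set (E := exp (- (INR (k + r) * q)) * (1 - INR (k + r) * q ^ 2)) in *. clearbody E.
  set (B := (1-q)^k) in *. clearbody B.
  unfold Rdiv.
  replace (F * / INR (fact r) * q ^ r * B) with ((F * q ^ r * / INR (fact r)) * B) by ring.
  destruct (Rle_dec 0 E) as [hp|hn].
  - apply Rmult_le_compat; try lra.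
    + repeat apply Rmult_le_pos; lra.
    + apply Rmult_le_compat_r; [lra|]. apply Rmult_le_compat_r; lra.
  - assert (0 <= F * q ^ r * / INR (fact r) * B) by (repeat apply Rmult_le_pos; lra).
    assert (0 <= INR k ^ r * q ^ r * / INR (fact r)) by (repeat apply Rmult_le_pos; lra).
    nra.
Qed.


Definition Lf (l : R -> R) (alpha y : R) := Rpower y alpha * l y.

Lemma eventually_big A : exists N, forall n, (n >= N)%nat -> A < INR n.
Proof.
  destruct (INR_unbounded A) as [N HN]. exists N. intros n hn.
  apply le_INR in hn. lra.
Qed.

Lemma rv_nb p Mf alpha l : MfOK p Mf -> regularly_varying p alpha l ->
  forall eps, 0 < eps -> exists d, 0 < d /\ forall x, 0 < x < d ->
    Rabs (nbf p Mf x / (Rpower x (- alpha) * l (1 / x)) - 1) < eps.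
Proof.
  intros HM [_ H] eps he. destruct (H eps he) as [d [hd Hd]].
  exists d; split; auto. intros x hx. apply Hd; auto. apply nb_nubar; auto; lra.
Qed.

Lemma div_zero_contra a b e : e < 1 -> Rabs (a / b - 1) < e -> b <> 0.
Proof.
  intros he h hb. rewrite hb in h. unfold Rdiv in h. rewrite Rinv_0, Rmult_0_r in h.
  replace (0 - 1) with (-(1)) in h by ring. rewrite Rabs_Ropp, Rabs_R1 in h. lra.
Qed.

Lemma abs_lt a e : Rabs a < e -> - e < a < e.
Proof. intros h. apply Rabs_def2 in h. lra. Qed.

Lemma Rpower_div_neg t y alpha : 0 < t -> 0 < y ->
  Rpower (t / y) (- alpha) = Rpower t (- alpha) * Rpower y alpha.
Proof.
  intros ht hy. unfold Rpower. rewrite ln_div by auto. rewrite <- exp_plus. f_equal. ring.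
Qed.

Lemma Rpower_pos x y : 0 < Rpower x y.
Proof. unfold Rpower. apply exp_pos. Qed.

Lemma prod_close A B e : - e < A - 1 < e -> - e < B - 1 < e -> 0 < e <= 1/2 ->
  - (3 * e) < A * B - 1 < 3 * e.
Proof. intros h1 h2 h3. split; nra. Qed.

Lemma nbcv p Mf alpha l t : MfOK p Mf -> regularly_varying p alpha l -> 0 < t ->
  Un_cv (fun n => nbf p Mf (t / INR n) / Lf l alpha (INR n)) (Rpower t (- alpha)).
Proof.
  intros HM HRV ht eps heps.
  set (K := Rpower t (- alpha)).
  assert (hK : 0 < K) by apply Rpower_pos.
  set (e := Rmin (1/2) (eps / (4 * K))).
  assert (he : 0 < e) by (unfold e; apply Rmin_glb_lt; [lra| apply Rdiv_lt_0_compat; lra]).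
  assert (he1 : e <= 1/2) by apply Rmin_l.
  assert (he2 : e <= eps / (4 * K)) by apply Rmin_r.
  destruct (rv_nb p Mf alpha l HM HRV e he) as [d [hd Hd]].
  destruct HRV as [HSV _].
  destruct (HSV (/ t) ltac:(apply Rinv_0_lt_compat; lra) e he) as [T HT].
  destruct (eventually_big (Rmax 1 (Rmax (t / d) T))) as [N HN].
  exists N. intros n hn. specialize (HN n hn).
  set (y := INR n) in *.
  assert (hy1 : 1 < y) by (eapply Rle_lt_trans; [apply Rmax_l|exact HN]).
  assert (hy2 : t / d < y) by (eapply Rle_lt_trans; [eapply Rle_trans; [apply Rmax_l|apply Rmax_r]|exact HN]).
  assert (hy3 : T < y) by (eapply Rle_lt_trans; [eapply Rle_trans; [apply Rmax_r|apply Rmax_r]|exact HN]).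
  assert (hx : 0 < t / y < d).
  { split. apply Rdiv_lt_0_compat; lra.
    apply Rmult_lt_reg_r with y; [lra|]. unfold Rdiv. rewrite Rmult_assoc, Rinv_l by lra.
    apply Rmult_lt_reg_r with (/ d); [apply Rinv_0_lt_compat; lra|].
    rewrite Rmult_1_r. replace (d * y * / d) with y by (field; lra). exact hy2. }
  specialize (Hd _ hx). specialize (HT y hy3).
  assert (h1x : 1 / (t / y) = / t * y) by (field; lra).
  rewrite h1x in Hd.
  rewrite Rpower_div_neg in Hd by lra. fold K in Hd.
  assert (hly : l y <= 0 \/ l y > 0) by lra.
  assert (ly0 : l y <> 0) by (eapply div_zero_contra; [|exact HT]; lra).
  assert (D0 : K * Rpower y alpha * l (/ t * y) <> 0) by (eapply div_zero_contra; [|exact Hd]; lra).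
  assert (hpy : 0 < Rpower y alpha) by apply Rpower_pos.
  set (A1 := nbf p Mf (t / y) / (K * Rpower y alpha * l (/ t * y))) in *.
  set (B1 := l (/ t * y) / l y) in *.
  assert (eq : nbf p Mf (t / y) / Lf l alpha y = A1 * K * B1).
  { unfold A1, B1, Lf. field. repeat split; auto; try lra.
    intro h; apply D0; rewrite h; ring. }
  unfold Rdist. rewrite eq.
  apply abs_lt in Hd. apply abs_lt in HT.
  assert (hc := prod_close A1 B1 e Hd HT ltac:(lra)).
  replace (A1 * K * B1 - K) with (K * (A1 * B1 - 1)) by ring.
  rewrite Rabs_mult, (Rabs_right K) by lra.
  assert (Rabs (A1 * B1 - 1) < 3 * e) by (apply Rabs_def1; lra).
  assert (K * (3 * e) <= 3 / 4 * eps).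
  { replace (3/4*eps) with (K * (3 * (eps / (4 * K)))) by (field; lra).
    apply Rmult_le_compat_l; lra. }
  assert (K * Rabs (A1 * B1 - 1) <= K * (3 * e)) by (apply Rmult_le_compat_l; lra).
  lra.
Qed.

Lemma lpos p Mf alpha l : MfOK p Mf -> regularly_varying p alpha l ->
  exists T, 0 < T /\ forall y, T < y -> 0 < l y.
Proof.
  intros HM HRV. destruct (rv_nb p Mf alpha l HM HRV (1/2) ltac:(lra)) as [d [hd Hd]].
  exists (1/d). split; [apply Rdiv_lt_0_compat; lra|]. intros y hy.
  assert (hy0 : 0 < y) by (assert (0 < 1/d) by (apply Rdiv_lt_0_compat; lra); lra).
  assert (hx : 0 < 1/y < d).
  { split. apply Rdiv_lt_0_compat; lra.
    apply Rmult_lt_reg_r with y; [lra|]. replace (1/y*y) with 1 by (field; lra).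
    apply Rmult_lt_reg_r with (/ d); [apply Rinv_0_lt_compat; lra|].
    replace (d * y * / d) with y by (field; lra). unfold Rdiv in hy. lra. }
  specialize (Hd _ hx). replace (1 / (1 / y)) with y in Hd by (field; lra).
  assert (D0 := div_zero_contra _ _ (1/2) ltac:(lra) Hd).
  apply abs_lt in Hd.
  assert (hn := nb_nonneg p Mf (1/y)).
  assert (hp := Rpower_pos (1/y) (-alpha)).
  set (D := Rpower (1 / y) (- alpha) * l y) in *.
  assert (eq : nbf p Mf (1/y) = (nbf p Mf (1/y) / D) * D) by (field; auto).
  set (A := nbf p Mf (1/y) / D) in *.
  assert (0 < D) by nra.
  unfold D in H. nra.
Qed.

Lemma potter p Mf alpha l : MfOK p Mf -> regularly_varying p alpha l -> 0 < alpha < 1 ->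
  exists x0 q, 0 < x0 /\ 0 <= q < 2 /\ forall x, 0 < x <= x0 -> nbf p Mf (x / 2) <= q * nbf p Mf x.
Proof.
  intros HM HRV ha.
  set (P := Rpower 2 alpha).
  assert (hP : P < 2) by (unfold P; rewrite <- (Rpower_1 2) at 2 by lra; apply Rpower_lt; lra).
  assert (hP1 : 1 <= P) by (unfold P; rewrite <- (Rpower_O 2) by lra; apply Rle_Rpower; lra).
  set (e := Rmin (1/5) ((2 - P) / 16)).
  assert (he : 0 < e) by (unfold e; apply Rmin_glb_lt; lra).
  assert (he1 : e <= 1/5) by apply Rmin_l.
  assert (he2 : e <= (2 - P) / 16) by apply Rmin_r.
  destruct (rv_nb p Mf alpha l HM HRV e he) as [d [hd Hd]].
  destruct HRV as [HSV _].
  destruct (HSV 2 ltac:(lra) e he) as [T HT].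
  set (x0 := Rmin (d / 2) (1 / (Rabs T + 1))).
  assert (hT := Rabs_pos T).
  assert (hx0 : 0 < x0) by (unfold x0; apply Rmin_glb_lt; apply Rdiv_lt_0_compat; lra).
  exists x0, (P * (1 + e) ^ 2 / (1 - e)). split; [auto|]. split.
  { split. apply Rdiv_le_0_compat; [|lra]. apply Rmult_le_pos; [lra|apply pow2_ge_0].
    apply Rmult_lt_reg_r with (1 - e); [lra|]. unfold Rdiv. rewrite Rmult_assoc, Rinv_l by lra.
    nra. }
  intros x hx.
  assert (hxd : x <= d / 2) by (eapply Rle_trans; [apply hx| apply Rmin_l]).
  assert (hxT : x <= 1 / (Rabs T + 1)) by (eapply Rle_trans; [apply hx| apply Rmin_r]).
  assert (hyT : T < 1 / x).
  { apply Rle_lt_trans with (Rabs T); [apply Rle_abs|].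
    apply Rmult_le_compat_r with (r := (Rabs T + 1) / x) in hxT; [|apply Rdiv_le_0_compat; lra].
    replace (x * ((Rabs T + 1) / x)) with (Rabs T + 1) in hxT by (field; lra).
    replace (1 / (Rabs T + 1) * ((Rabs T + 1) / x)) with (1 / x) in hxT by (field; lra). lra. }
  assert (H1 := Hd x ltac:(lra)). assert (H2 := Hd (x / 2) ltac:(lra)).
  specialize (HT (1 / x) hyT).
  replace (1 / (x / 2)) with (2 * (1 / x)) in H2 by (field; lra).
  rewrite Rpower_div_neg in H2 by lra. fold P in H2.
  assert (D1 := div_zero_contra _ _ e ltac:(lra) H1).
  assert (D2 := div_zero_contra _ _ e ltac:(lra) H2).
  assert (D3 := div_zero_contra _ _ e ltac:(lra) HT).
  apply abs_lt in H1. apply abs_lt in H2. apply abs_lt in HT.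
  assert (hpx := Rpower_pos x (- alpha)).
  assert (hn1 := nb_nonneg p Mf x).
  set (a := l (1 / x)) in *. set (b := l (2 * (1 / x))) in *.
  set (n1 := nbf p Mf x) in *. set (n2 := nbf p Mf (x / 2)) in *.
  set (X := Rpower x (- alpha)) in *.
  set (A1 := n1 / (X * a)) in *. set (A2 := n2 / (X * P * b)) in *. set (B := b / a) in *.
  assert (Xn : X <> 0) by lra.
  assert (an : a <> 0) by (intro h; apply D1; rewrite h; ring).
  assert (bn : b <> 0) by (intro h; apply D2; rewrite h; ring).
  assert (Pn : P <> 0) by lra.
  assert (e1 : n1 = A1 * (X * a)) by (unfold A1; field; auto).
  assert (e2 : n2 = A2 * P * B * (X * a)).
  { unfold A2, B. field. repeat split; auto. }
  assert (hXa : 0 < X * a).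
  { assert (X * a <> 0) by auto. destruct (Rlt_dec 0 (X * a)); [auto|].
    assert (X * a < 0) by lra. nra. }
  rewrite e1, e2.
  assert (hq : P * (1 + e) ^ 2 / (1 - e) * (1 - e) = P * (1+e) ^ 2) by (field; lra).
  assert (A2 * P * B <= P * (1 + e) ^ 2).
  { assert (0 <= A2) by lra. assert (0 <= B) by lra.
    assert (A2 * B <= (1 + e) * (1 + e)) by (apply Rmult_le_compat; lra).
    replace (A2 * P * B) with (P * (A2 * B)) by ring.
    apply Rmult_le_compat_l; [lra|]. simpl. lra. }
  assert (P * (1+e)^2 <= P * (1 + e) ^ 2 / (1 - e) * A1).
  { rewrite <- hq at 1. apply Rmult_le_compat_l; [|lra].
    apply Rdiv_le_0_compat; [|lra]. apply Rmult_le_pos; [lra|apply pow2_ge_0]. }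
  nra.
Qed.


Definition Aq (p : nat -> R) (r : nat) (x : R) (M : nat) :=
  ssum (fun j => (1 - Ind x (p j)) * p j ^ r) M.

Lemma pow_half y r : 0 <= y -> (1 <= r)%nat -> (y / 2) ^ r <= y ^ r / 2.
Proof.
  intros hy hr. destruct r; [lia|].
  replace ((y/2)^(S r)) with (y / 2 * (y/2)^r) by reflexivity.
  replace (y ^ S r / 2) with (y / 2 * y ^ r) by (simpl; field).
  apply Rmult_le_compat_l; [lra|]. apply pow_incr; lra.
Qed.

Lemma pow2_ge n : INR n + 1 <= 2 ^ n.
Proof.
  induction n; [simpl; lra|]. rewrite S_INR. change (2 ^ S n) with (2 * 2 ^ n).
  assert (1 <= 2 ^ n) by (apply pow_R1_Rle; lra). lra.
Qed.

Lemma A_bound p Mf r x0 q : MfOK p Mf -> (forall j, 0 <= p j <= 1) -> (1 <= r)%nat ->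
  0 <= q < 2 -> (forall x, 0 < x <= x0 -> nbf p Mf (x / 2) <= q * nbf p Mf x) ->
  forall x, 0 < x <= x0 -> x <= 1 -> forall M,
  Aq p r x M <= (2 * q / (2 - q)) * x ^ r * nbf p Mf x.
Proof.
  intros HM hp hr hq Hpot x hx hx1 M.
  set (Q := 2 * q / (2 - q)).
  assert (hQ0 : 0 <= Q) by (unfold Q; apply Rdiv_le_0_compat; lra).
  assert (hQ : q * (Q / 2 + 1) = Q) by (unfold Q; field; lra).
  assert (claim : forall K y, 0 < y <= x0 ->
    Aq p r y M <= Q * y ^ r * nbf p Mf y + INR M * (y / 2 ^ K) ^ r).
  { induction K; intros y hy.
    - simpl. replace (y / 1) with y by field.
      assert (Aq p r y M <= INR M * y ^ r).
      { unfold Aq. rewrite <- ssum_const. apply ssum_le. intros j _.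
        unfold Ind. destruct Rle_dec.
        - rewrite Rminus_diag, Rmult_0_l. apply pow_le; lra.
        - rewrite Rminus_0_r, Rmult_1_l. apply pow_incr. specialize (hp j). lra. }
      assert (0 <= Q * y ^ r * nbf p Mf y).
      { apply Rmult_le_pos; [apply Rmult_le_pos; [lra|apply pow_le; lra]|apply nb_nonneg]. }
      lra.
    - assert (hy2 : 0 < y / 2 <= x0) by lra.
      specialize (IHK (y / 2) hy2).
      assert (step : Aq p r y M <= Aq p r (y / 2) M + y ^ r * INR (cnt p (y / 2) M)).
      { unfold Aq. rewrite cnt_INR, <- ssum_scal, <- ssum_plus. apply ssum_le. intros j _.
        specialize (hp j). assert (0 <= p j ^ r) by (apply pow_le; lra).
        assert (0 <= y ^ r) by (apply pow_le; lra).
        unfold Ind. destruct (Rle_dec y (p j)); destruct (Rle_dec (y/2) (p j)); try lra.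
        assert (p j ^ r <= y ^ r) by (apply pow_incr; lra). lra. }
      assert (c1 : INR (cnt p (y / 2) M) <= nbf p Mf (y / 2)) by (apply cnt_le_nb; auto; lra).
      assert (c2 := Hpot y hy).
      assert (hyr : (y / 2) ^ r <= y ^ r / 2) by (apply pow_half; [lra|exact hr]).
      assert (0 <= y ^ r) by (apply pow_le; lra).
      assert (hn := nb_nonneg p Mf y). assert (hn2 := nb_nonneg p Mf (y / 2)).
      replace (y / 2 / 2 ^ K) with (y / 2 ^ S K) in IHK by (simpl; field; apply pow_nonzero; lra).
      assert (t1 : Q * (y / 2) ^ r * nbf p Mf (y / 2) <= Q * (y ^ r / 2) * (q * nbf p Mf y)).
      { apply Rmult_le_compat; try (apply Rmult_le_pos; try apply pow_le; lra); try lra.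
        apply Rmult_le_compat_l; lra. }
      assert (t2 : y ^ r * INR (cnt p (y / 2) M) <= y ^ r * (q * nbf p Mf y)).
      { apply Rmult_le_compat_l; lra. }
      assert (Q * (y ^ r / 2) * (q * nbf p Mf y) + y ^ r * (q * nbf p Mf y) = Q * y ^ r * nbf p Mf y).
      { rewrite <- hQ at 2. field. }
      lra. }
  destruct (Rle_dec (Aq p r x M) (Q * x ^ r * nbf p Mf x)) as [h|h]; [exact h|].
  exfalso. set (del := Aq p r x M - Q * x ^ r * nbf p Mf x).
  assert (hdel : 0 < del) by (unfold del; lra).
  destruct (INR_unbounded (INR M / del)) as [K HK].
  specialize (claim K x hx).
  assert (h2K : 0 < 2 ^ K) by (apply pow_lt; lra).
  assert (hxk : 0 <= x / 2 ^ K <= 1).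
  { split. apply Rdiv_le_0_compat; lra.
    apply Rmult_le_reg_r with (2 ^ K); [lra|]. unfold Rdiv. rewrite Rmult_assoc, Rinv_l by lra.
    generalize (pow2_ge K) (pos_INR K). nra. }
  assert ((x / 2 ^ K) ^ r <= x / 2 ^ K).
  { destruct r; [lia|]. simpl. assert ((x / 2 ^ K) ^ r <= 1) by (apply pow_le1; lra). nra. }
  assert (INR M * (x / 2 ^ K) <= INR M / (INR K + 1)).
  { apply Rmult_le_compat_l; [apply pos_INR|]. unfold Rdiv. rewrite <- (Rmult_1_l (/ (INR K + 1))).
    apply Rmult_le_compat; try lra. left; apply Rinv_0_lt_compat; lra.
    apply Rinv_le_contravar; [generalize (pos_INR K); lra|]. generalize (pow2_ge K); lra. }
  assert (INR M / (INR K + 1) < del).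
  { apply Rmult_lt_reg_r with (INR K + 1); [generalize (pos_INR K); lra|].
    unfold Rdiv. rewrite Rmult_assoc, Rinv_l by (generalize (pos_INR K); lra).
    apply Rmult_lt_reg_r with (/ del); [apply Rinv_0_lt_compat; lra|].
    replace (del * (INR K + 1) * / del) with (INR K + 1) by (field; lra). unfold Rdiv in HK. lra. }
  assert (INR M * (x / 2 ^ K) ^ r <= INR M * (x / 2 ^ K)) by (apply Rmult_le_compat_l; [apply pos_INR|lra]).
  unfold del in *. lra.
Qed.

Definition cI (u : nat -> R) i q := Ind (u i) q - Ind (u (S i)) q.

Lemma mono_grid (u : nat -> R) : (forall i, u i <= u (S i)) -> forall i j, (i <= j)%nat -> u i <= u j.
Proof. intros H i j hij. induction hij; [lra|]. specialize (H m). lra. Qed.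

Lemma ssum_zero f m : (forall i, (i < m)%nat -> f i = 0) -> ssum f m = 0.
Proof.
  intros H. rewrite (ssum_ext f (fun _ => 0)) by auto. rewrite ssum_const. ring.
Qed.

Lemma cells_zero_above u (B : nat -> R) (m : nat) q : (forall i, u i <= u (S i)) -> u m <= q ->
  ssum (fun i => cI u i q * B i) m = 0.
Proof.
  intros Hu hq. apply ssum_zero. intros i hi. unfold cI, Ind.
  assert (u (S i) <= u m) by (apply mono_grid; auto).
  assert (u i <= u (S i)) by auto.
  destruct (Rle_dec (u i) q); destruct (Rle_dec (u (S i)) q); try lra; ring.
Qed.

Lemma cells_zero_below u (B : nat -> R) (m : nat) q : (forall i, u i <= u (S i)) -> q < u O ->
  ssum (fun i => cI u i q * B i) m = 0.
Proof.
  intros Hu hq. apply ssum_zero. intros i hi. unfold cI, Ind.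
  assert (u O <= u i) by (apply mono_grid; auto; lia).
  assert (u i <= u (S i)) by auto.
  destruct (Rle_dec (u i) q); destruct (Rle_dec (u (S i)) q); try lra; ring.
Qed.

Lemma cells_upper u (B : nat -> R) (f : R -> R) (D : R -> Prop) (m : nat) q : (forall i, u i <= u (S i)) ->
  D q -> (forall i, (i < m)%nat -> forall q, D q -> u i <= q < u (S i) -> f q <= B i) ->
  u O <= q < u m -> f q <= ssum (fun i => cI u i q * B i) m.
Proof.
  intros Hu HD. induction m; intros HB hq; [lra|].
  simpl. destruct (Rle_dec (u m) q) as [h|h].
  - rewrite cells_zero_above by auto. unfold cI, Ind.
    destruct (Rle_dec (u m) q); [|lra]. destruct (Rle_dec (u (S m)) q); [lra|].
    specialize (HB m ltac:(lia) q HD ltac:(lra)). lra.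
  - assert (cI u m q = 0).
    { unfold cI, Ind. assert (u m <= u (S m)) by auto.
      destruct (Rle_dec (u m) q); destruct (Rle_dec (u (S m)) q); try lra. }
    rewrite H, Rmult_0_l, Rplus_0_r. apply Rnot_le_lt in h. apply IHm; [intros i0 hi0 q0 hd0 hq0; apply HB; [lia|exact hd0|exact hq0]| lra].
Qed.

Lemma cells_lower u (B : nat -> R) (f : R -> R) (D : R -> Prop) (m : nat) q : (forall i, u i <= u (S i)) ->
  D q -> (forall i, (i < m)%nat -> forall q, D q -> u i <= q < u (S i) -> B i <= f q) ->
  u O <= q < u m -> ssum (fun i => cI u i q * B i) m <= f q.
Proof.
  intros Hu HD. induction m; intros HB hq; [lra|].
  simpl. destruct (Rle_dec (u m) q) as [h|h].
  - rewrite cells_zero_above by auto. unfold cI, Ind.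
    destruct (Rle_dec (u m) q); [|lra]. destruct (Rle_dec (u (S m)) q); [lra|].
    specialize (HB m ltac:(lia) q HD ltac:(lra)). lra.
  - assert (cI u m q = 0).
    { unfold cI, Ind. assert (u m <= u (S m)) by auto.
      destruct (Rle_dec (u m) q); destruct (Rle_dec (u (S m)) q); try lra. }
    rewrite H, Rmult_0_l, Rplus_0_r. apply Rnot_le_lt in h. apply IHm; [intros i0 hi0 q0 hd0 hq0; apply HB; [lia|exact hd0|exact hq0]| lra].
Qed.

Lemma cells_sum (p : nat -> R) u (B : nat -> R) (m M : nat) :
  ssum (fun j => ssum (fun i => cI u i (p j) * B i) m) M =
  ssum (fun i => B i * (INR (cnt p (u i) M) - INR (cnt p (u (S i)) M))) m.
Proof.
  rewrite ssum_swap. apply ssum_ext. intros i _.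
  rewrite !cnt_INR, <- ssum_minus, <- ssum_scal. apply ssum_ext. intros j _.
  unfold cI. ring.
Qed.


Definition Fg (s t : R) := Rpower t (s - 1) * exp (- t).
Definition Ig s a b := RInt (Fg s) a b.

Lemma Rpow_cont y t : 0 < t -> continuous (fun x => Rpower x y) t.
Proof. intros ht. apply (@ex_derive_continuous R_AbsRing R_NormedModule). unfold Rpower. auto_derive. lra. Qed.

Lemma Fg_cont s t : 0 < t -> continuous (Fg s) t.
Proof. intros ht. apply (@ex_derive_continuous R_AbsRing R_NormedModule). unfold Fg, Rpower. auto_derive. lra. Qed.

Lemma Fg_int s a b : 0 < a -> 0 < b -> ex_RInt (Fg s) a b.
Proof.
  intros ha hb. apply (@ex_RInt_continuous R_CompleteNormedModule). intros z hz. apply Fg_cont.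
  assert (0 < Rmin a b) by (apply Rmin_glb_lt; auto). lra.
Qed.

Lemma Fg_pos s t : 0 < Fg s t.
Proof. unfold Fg. apply Rmult_lt_0_compat; [unfold Rpower|]; apply exp_pos. Qed.

Lemma Rpow_FTC y u v : y <> 0 -> 0 < u -> 0 < v ->
  is_RInt (fun t => Rpower t (y - 1)) u v ((Rpower v y - Rpower u y) / y).
Proof.
  intros hy hu hv.
  replace ((Rpower v y - Rpower u y) / y) with (minus (/ y * Rpower v y) (/ y * Rpower u y))
    by (unfold minus, plus, opp; simpl; field; auto).
  apply (is_RInt_derive (fun t => / y * Rpower t y)).
  - intros x hx. assert (0 < x).
    { assert (0 < Rmin u v) by (apply Rmin_glb_lt; auto). lra. }
    assert (h := derivable_pt_lim_power x y H). apply is_derive_Reals in h.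
    apply (is_derive_scal _ _ (/ y)) in h.
    replace (Rpower x (y - 1)) with (/ y * (y * Rpower x (y - 1))); [exact h|].
    field. auto.
  - intros x hx. apply Rpow_cont.
    assert (0 < Rmin u v) by (apply Rmin_glb_lt; auto). lra.
Qed.

Lemma Rpow_FTC_scal c y u v : y <> 0 -> 0 < u -> 0 < v ->
  RInt (fun t => c * Rpower t (y - 1)) u v = c * ((Rpower v y - Rpower u y) / y).
Proof.
  intros hy hu hv. apply is_RInt_unique.
  exact (is_RInt_scal _ _ _ c _ (Rpow_FTC y u v hy hu hv)).
Qed.

Lemma Ig_chasles s a b c : 0 < a -> 0 < b -> 0 < c -> Ig s a b + Ig s b c = Ig s a c.
Proof.
  intros. unfold Ig. apply (RInt_Chasles (V := R_CompleteNormedModule)); apply Fg_int; auto.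
Qed.

Lemma Ig_nonneg s a b : 0 < a <= b -> 0 <= Ig s a b.
Proof.
  intros h. unfold Ig. apply RInt_ge_0; [lra| apply Fg_int; lra|]. intros. left; apply Fg_pos.
Qed.

Lemma Ig_mono s a b a' b' : 0 < a' <= a -> a <= b -> b <= b' -> Ig s a b <= Ig s a' b'.
Proof.
  intros h1 h2 h3.
  rewrite <- (Ig_chasles s a' a b') by lra. rewrite <- (Ig_chasles s a b b') by lra.
  assert (0 <= Ig s a' a) by (apply Ig_nonneg; lra).
  assert (0 <= Ig s b b') by (apply Ig_nonneg; lra). lra.
Qed.

Lemma Rpower_1_base y : Rpower 1 y = 1.
Proof. unfold Rpower. rewrite ln_1, Rmult_0_r. apply exp_0. Qed.

Lemma Ig_low_bound s a : 0 < s -> 0 < a <= 1 -> Ig s a 1 <= 1 / s.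
Proof.
  intros hs ha. unfold Ig.
  eapply Rle_trans.
  - apply (RInt_le _ (fun t => 1 * Rpower t (s - 1))); try lra.
    + apply Fg_int; lra.
    + apply (@ex_RInt_continuous R_CompleteNormedModule). intros z hz.
      apply (@ex_derive_continuous R_AbsRing R_NormedModule).
      assert (0 < Rmin a 1) by (apply Rmin_glb_lt; lra).
      unfold Rpower. auto_derive. lra.
    + intros x hx. unfold Fg. rewrite Rmult_1_l.
      assert (exp (- x) <= 1) by (rewrite <- exp_0; left; apply exp_increasing; lra).
      assert (0 < Rpower x (s - 1)) by (unfold Rpower; apply exp_pos).
      nra.
  - rewrite Rpow_FTC_scal by lra. rewrite Rpower_1_base.
    assert (0 < Rpower a s) by (unfold Rpower; apply exp_pos).
    unfold Rdiv. rewrite Rmult_1_l. apply Rmult_le_compat_r; [left; apply Rinv_0_lt_compat; lra|lra].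
Qed.

Lemma Ig_high_bound s r b : s <= INR r -> 1 <= b -> Ig s 1 b <= INR (r + 2) ^ (r + 2).
Proof.
  intros hs hb. set (K := INR (r + 2)).
  assert (hK : 0 < K) by (unfold K; apply lt_0_INR; lia).
  unfold Ig. eapply Rle_trans.
  - apply (RInt_le _ (fun t => K ^ (r + 2) * Rpower t (-1 - 1))); try lra.
    + apply Fg_int; lra.
    + apply (@ex_RInt_continuous R_CompleteNormedModule). intros z hz.
      apply (@ex_derive_continuous R_AbsRing R_NormedModule).
      assert (1 <= Rmin 1 b) by (apply Rmin_glb; lra).
      unfold Rpower. auto_derive. lra.
    + intros x hx. unfold Fg.
      assert (h1 : Rpower x (s - 1) <= x ^ r).
      { rewrite <- Rpower_pow by lra. apply Rle_Rpower; lra. }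
      assert (h2 : (x / K) ^ (r + 2) <= exp x) by (apply exp_ge_pow; [lra| unfold K; lia]).
      assert (hx2 : 0 < (x / K) ^ (r + 2)) by (apply pow_lt; apply Rdiv_lt_0_compat; lra).
      assert (h3 : exp (- x) <= / (x / K) ^ (r + 2)).
      { rewrite exp_Ropp. apply Rinv_le_contravar; auto. }
      assert (h4 : Rpower x (-1 - 1) = / x ^ 2).
      { replace (-1 - 1) with (- INR 2) by (simpl; ring). rewrite Rpower_Ropp, Rpower_pow by lra. reflexivity. }
      rewrite h4.
      assert (e : x ^ r * / (x / K) ^ (r + 2) = K ^ (r + 2) * / x ^ 2).
      { unfold Rdiv. rewrite Rpow_mult_distr, pow_add, pow_inv. field. repeat split; try lra; apply pow_nonzero; lra. }
      assert (0 < Rpower x (s - 1)) by (unfold Rpower; apply exp_pos).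
      assert (0 < exp (- x)) by apply exp_pos.
      rewrite <- e. apply Rmult_le_compat; lra.
  - rewrite Rpow_FTC_scal by lra. rewrite Rpower_1_base.
    assert (hb1 : Rpower b (-1) = / b).
    { replace (-1) with (- (1)) by ring. rewrite Rpower_Ropp, Rpower_1 by lra. reflexivity. }
    rewrite hb1.
    assert (0 < K ^ (r + 2)) by (apply pow_lt; lra).
    assert (0 < / b) by (apply Rinv_0_lt_compat; lra).
    replace (K ^ (r + 2) * ((/ b - 1) / -1)) with (K ^ (r + 2) * (1 - / b)) by (field; lra).
    nra.
Qed.

Lemma Gamma_exists s r : 0 < s -> s <= INR r -> exists G, is_Gamma s G /\ 0 < G /\
  (forall a b, 0 < a <= b -> Ig s a b <= G) /\
  (forall del, 0 < del -> exists a0 b0, 0 < a0 <= b0 /\ G - del < Ig s a0 b0).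
Proof.
  intros hs hsr.
  set (E := fun y => exists a b, 0 < a <= b /\ y = Ig s a b).
  assert (hB : bound E).
  { exists (1 / s + INR (r + 2) ^ (r + 2)). intros y [a [b [hab ->]]].
    eapply Rle_trans; [apply (Ig_mono s a b (Rmin a 1) (Rmax b 1))|].
    - split; [apply Rmin_glb_lt; lra| apply Rmin_l].
    - lra.
    - apply Rmax_l.
    - rewrite <- (Ig_chasles s (Rmin a 1) 1 (Rmax b 1)).
      + assert (Ig s (Rmin a 1) 1 <= 1 / s).
        { apply Ig_low_bound; auto. split; [apply Rmin_glb_lt; lra| apply Rmin_r]. }
        assert (Ig s 1 (Rmax b 1) <= INR (r + 2) ^ (r + 2)) by (apply Ig_high_bound; auto; apply Rmax_r).
        lra.
      + apply Rmin_glb_lt; lra.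
      + lra.
      + assert (1 <= Rmax b 1) by apply Rmax_r. lra. }
  assert (hne : exists y, E y) by (exists (Ig s 1 1), 1, 1; split; [lra|reflexivity]).
  destruct (completeness E hB hne) as [G [HG1 HG2]].
  assert (Hup : forall a b, 0 < a <= b -> Ig s a b <= G).
  { intros a b hab. apply HG1. exists a, b; auto. }
  assert (Happ : forall del, 0 < del -> exists a0 b0, 0 < a0 <= b0 /\ G - del < Ig s a0 b0).
  { intros del hdel. apply Classical_Prop.NNPP. intro hn.
    assert (is_upper_bound E (G - del)).
    { intros y [a [b [hab ->]]]. apply Rnot_lt_le. intro hlt. apply hn. exists a, b; auto. }
    specialize (HG2 _ H). lra. }
  exists G. split; [|split; [|split; auto]].
  - intros eps heps. destruct (Happ eps heps) as [a0 [b0 [hab0 hI]]].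
    exists a0. split; [lra|]. exists b0. split; [lra|].
    intros a b ha had hMb hab.
    exists (ex_RInt_Reals_0 (Fg s) a b (Fg_int s a b ltac:(lra) ltac:(lra))).
    rewrite <- RInt_Reals.
    change (RInt (fun t => Rpower t (s - 1) * exp (- t)) a b) with (Ig s a b).
    assert (Ig s a0 b0 <= Ig s a b) by (apply Ig_mono; lra).
    assert (Ig s a b <= G) by (apply Hup; lra).
    apply Rabs_def1; lra.
  - assert (0 < Ig s 1 2).
    { unfold Ig. apply RInt_gt_0; [lra| intros; apply Fg_pos|]. intros; apply Fg_cont; lra. }
    assert (Ig s 1 2 <= G) by (apply Hup; lra). lra.
Qed.


Definition G0 (r : nat) (u : R) := u ^ r * exp (- u).
Definition theta (r : nat) (a h : R) := exp (h * (INR r / a + 1)).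

Lemma G0_nonneg r u : 0 <= u -> 0 <= G0 r u.
Proof. intros. unfold G0. apply Rmult_le_pos; [apply pow_le; lra| left; apply exp_pos]. Qed.

Lemma exp_le x y : x <= y -> exp x <= exp y.
Proof. intros h. destruct (Req_dec x y) as [e|e]; [rewrite e; lra| left; apply exp_increasing; lra]. Qed.

Lemma theta_ge1 r a h : 0 < a -> 0 <= h -> 1 <= theta r a h.
Proof.
  intros. unfold theta.
  assert (0 <= h * (INR r / a + 1)).
  { apply Rmult_le_pos; auto. assert (0 <= INR r / a) by (apply Rdiv_le_0_compat; [apply pos_INR|lra]). lra. }
  generalize (exp_ineq1_le (h * (INR r / a + 1))). lra.
Qed.

Lemma G0_cell r a h u t : 0 < a <= u -> 0 <= h -> u <= t <= u + h ->
  G0 r u / theta r a h <= G0 r t <= theta r a h * G0 r u.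
Proof.
  intros ha hh ht. unfold G0, theta.
  assert (hu : 0 < u) by lra.
  assert (hur : 0 <= u ^ r) by (apply pow_le; lra).
  assert (htr : u ^ r <= t ^ r) by (apply pow_incr; lra).
  split.
  - unfold Rdiv. rewrite <- exp_Ropp.
    assert (e1 : exp (- (h * (INR r / a + 1))) <= exp (- h)).
    { assert (0 <= h * (INR r / a)) by (apply Rmult_le_pos; [lra| apply Rdiv_le_0_compat; [apply pos_INR|lra]]).
      destruct (Req_dec (h * (INR r / a + 1)) h) as [e|e]; [rewrite e; lra|].
      left. apply exp_increasing. lra. }
    assert (e2 : exp (- u) * exp (- h) <= exp (- t)).
    { rewrite <- exp_plus. destruct (Req_dec (- u + - h) (- t)) as [e|e]; [rewrite e; lra|].
      left; apply exp_increasing; lra. }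
    assert (0 < exp (- u)) by apply exp_pos.
    assert (0 < exp (- h)) by apply exp_pos.
    assert (0 < exp (- (h * (INR r / a + 1)))) by apply exp_pos.
    assert (u ^ r * exp (- u) * exp (- (h * (INR r / a + 1))) <= u ^ r * (exp (- u) * exp (- h))).
    { rewrite Rmult_assoc. apply Rmult_le_compat_l; auto. apply Rmult_le_compat_l; lra. }
    assert (u ^ r * (exp (- u) * exp (- h)) <= t ^ r * exp (- t)).
    { apply Rmult_le_compat; auto. apply Rmult_le_pos; lra. }
    lra.
  - assert (e1 : t ^ r <= u ^ r * exp (h * (INR r / a))).
    { assert (t <= u * exp (h / a)).
      { assert (1 + h / u <= exp (h / u)) by apply exp_ineq1_le.
        assert (h / u <= h / a).
        { unfold Rdiv. apply Rmult_le_compat_l; auto. apply Rinv_le_contravar; lra. }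
        assert (exp (h / u) <= exp (h / a)).
        { destruct (Req_dec (h/u) (h/a)) as [e|e]; [rewrite e; lra| left; apply exp_increasing; lra]. }
        assert (u * (1 + h / u) = u + h) by (field; lra). nra. }
      replace (h * (INR r / a)) with (INR r * (h / a)) by (field; lra).
      rewrite <- exp_pow, <- Rpow_mult_distr. apply pow_incr; lra. }
    assert (e2 : exp (- t) <= exp (- u)).
    { destruct (Req_dec t u) as [e|e]; [rewrite e; lra| left; apply exp_increasing; lra]. }
    replace (h * (INR r / a + 1)) with (h * (INR r / a) + h) by ring.
    rewrite exp_plus.
    assert (1 <= exp h) by (rewrite <- exp_0; destruct (Req_dec h 0) as [e|e]; [rewrite e; lra| left; apply exp_increasing; lra]).
    assert (0 < exp (- u)) by apply exp_pos.
    assert (0 < exp (- t)) by apply exp_pos.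
    assert (0 <= t ^ r) by (apply pow_le; lra).
    assert (0 < exp (h * (INR r / a))) by apply exp_pos.
    assert (t ^ r * exp (- t) <= u ^ r * exp (h * (INR r / a)) * exp (- u)) by (apply Rmult_le_compat; lra).
    assert (0 <= u ^ r * exp (h * (INR r / a)) * exp (- u)).
    { apply Rmult_le_pos; [apply Rmult_le_pos|]; lra. }
    nra.
Qed.

Lemma Fg_split r alpha t : 0 < t ->
  Fg (INR r - alpha) t = G0 r t * Rpower t (- alpha - 1).
Proof.
  intros ht. unfold Fg, G0.
  replace (INR r - alpha - 1) with (INR r + (- alpha - 1)) by ring.
  rewrite Rpower_plus, Rpower_pow by lra. ring.
Qed.

Lemma cell_int_upper r alpha a h u : 0 < a <= u -> 0 < h -> 0 < alpha ->
  Ig (INR r - alpha) u (u + h) <=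
  theta r a h * G0 r u * ((Rpower u (- alpha) - Rpower (u + h) (- alpha)) / alpha).
Proof.
  intros hu hh ha. unfold Ig.
  eapply Rle_trans.
  - apply (RInt_le _ (fun t => (theta r a h * G0 r u) * Rpower t (- alpha - 1))); try lra.
    + apply Fg_int; lra.
    + apply (@ex_RInt_continuous R_CompleteNormedModule). intros z hz.
      apply (@ex_derive_continuous R_AbsRing R_NormedModule).
      assert (u <= Rmin u (u + h)) by (apply Rmin_glb; lra).
      unfold Rpower. auto_derive. lra.
    + intros x hx. rewrite Fg_split by lra.
      destruct (G0_cell r a h u x) as [_ h2]; try lra.
      assert (0 < Rpower x (- alpha - 1)) by apply Rpower_pos.
      apply Rmult_le_compat_r; lra.
  - replace (- alpha - 1) with (- alpha - 1) by ring.
    rewrite Rpow_FTC_scal by lra. right. field. lra.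
Qed.

Lemma cell_int_lower r alpha a h u : 0 < a <= u -> 0 < h -> 0 < alpha ->
  G0 r u / theta r a h * ((Rpower u (- alpha) - Rpower (u + h) (- alpha)) / alpha)
  <= Ig (INR r - alpha) u (u + h).
Proof.
  intros hu hh ha. unfold Ig.
  eapply Rle_trans.
  2:{ apply (RInt_le (fun t => (G0 r u / theta r a h) * Rpower t (- alpha - 1))); try lra.
    + apply (@ex_RInt_continuous R_CompleteNormedModule). intros z hz.
      apply (@ex_derive_continuous R_AbsRing R_NormedModule).
      assert (u <= Rmin u (u + h)) by (apply Rmin_glb; lra).
      unfold Rpower. auto_derive. lra.
    + apply Fg_int; lra.
    + intros x hx. rewrite Fg_split by lra.
      destruct (G0_cell r a h u x) as [h1 _]; try lra.
      assert (0 < Rpower x (- alpha - 1)) by apply Rpower_pos.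
      apply Rmult_le_compat_r; lra. }
  assert (0 < theta r a h) by (unfold theta; apply exp_pos).
  rewrite Rpow_FTC_scal by lra. right. field. repeat split; lra.
Qed.


Lemma fact_pos r : 0 < INR (fact r).
Proof. apply lt_0_INR, lt_O_fact. Qed.

Lemma pt_cell_up k r q : 0 <= q <= 1 ->
  binom_pmf (k + r) r q <= G0 r (INR (k + r) * q) / INR (fact r) * exp (q * INR r).
Proof.
  intros hq. eapply Rle_trans; [apply binom_upper; auto|].
  right. unfold G0. rewrite plus_INR.
  replace (- (q * INR k)) with (- ((INR k + INR r) * q) + q * INR r) by ring.
  rewrite exp_plus. field. generalize (fact_pos r); lra.
Qed.

Lemma pt_low k r q : 0 <= q <= 1 ->
  binom_pmf (k + r) r q <= INR (k + r) ^ r / INR (fact r) * q ^ r.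
Proof.
  intros hq. eapply Rle_trans; [apply binom_upper; auto|].
  assert (0 <= INR k) by apply pos_INR.
  assert (exp (- (q * INR k)) <= 1) by (rewrite <- exp_0; apply exp_le; nra).
  assert (0 <= (INR (k + r) * q) ^ r / INR (fact r)).
  { apply Rdiv_le_0_compat; [apply pow_le; apply Rmult_le_pos; [apply pos_INR|lra]| apply fact_pos]. }
  rewrite Rpow_mult_distr. unfold Rdiv.
  replace (INR (k + r) ^ r * / INR (fact r) * q ^ r) with (INR (k + r) ^ r * q ^ r * / INR (fact r) * 1) by ring.
  apply Rmult_le_compat_l; auto. unfold Rdiv in H1. rewrite Rpow_mult_distr in H1. exact H1.
Qed.

Lemma pt_high k r q b : 0 <= q <= 1 -> (r <= k)%nat -> 0 < b <= INR (k + r) * q ->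
  binom_pmf (k + r) r q <= INR (2 * r + 2) ^ (r + 1) / (INR (fact r) * b).
Proof.
  intros hq hk hb. eapply Rle_trans; [apply binom_upper; auto|].
  set (t := INR (k + r) * q) in *.
  assert (hkr : INR (k + r) <= 2 * INR k) by (rewrite plus_INR; apply le_INR in hk; lra).
  assert (e1 : exp (- (q * INR k)) <= exp (- (t / 2))).
  { apply exp_le. unfold t. nra. }
  assert (ht : 0 < t) by lra.
  assert (e2 : (t / 2 / INR (r + 1)) ^ (r + 1) <= exp (t / 2)) by (apply exp_ge_pow; lia || lra).
  assert (hK : 0 < INR (r + 1)) by (apply lt_0_INR; lia).
  assert (hp : 0 < (t / 2 / INR (r + 1)) ^ (r + 1)) by (apply pow_lt; apply Rdiv_lt_0_compat; lra).
  assert (e3 : exp (- (t / 2)) <= / (t / 2 / INR (r + 1)) ^ (r + 1)).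
  { rewrite exp_Ropp. apply Rinv_le_contravar; auto. }
  assert (e4 : t ^ r * / (t / 2 / INR (r + 1)) ^ (r + 1) = INR (2 * r + 2) ^ (r + 1) / t).
  { replace (INR (2 * r + 2)) with (2 * INR (r + 1)) by (rewrite !plus_INR, mult_INR; simpl; ring).
    unfold Rdiv. rewrite !Rpow_mult_distr, !pow_inv, pow_add. simpl. field.
    repeat split; try lra; apply pow_nonzero; lra. }
  assert (hf := fact_pos r).
  assert (0 <= t ^ r) by (apply pow_le; lra).
  assert (0 < exp (- (q * INR k))) by apply exp_pos.
  assert (t ^ r / INR (fact r) * exp (- (q * INR k)) <= t ^ r / INR (fact r) * / (t / 2 / INR (r + 1)) ^ (r + 1)).
  { apply Rmult_le_compat_l; [apply Rdiv_le_0_compat; lra|lra]. }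
  assert (INR (2 * r + 2) ^ (r + 1) / t <= INR (2 * r + 2) ^ (r + 1) / b).
  { unfold Rdiv. apply Rmult_le_compat_l; [apply pow_le, pos_INR|]. apply Rinv_le_contravar; lra. }
  replace (t ^ r / INR (fact r) * / (t / 2 / INR (r + 1)) ^ (r + 1))
    with (/ INR (fact r) * (t ^ r * / (t / 2 / INR (r + 1)) ^ (r + 1))) in H1 by (field; lra).
  rewrite e4 in H1.
  replace (INR (2 * r + 2) ^ (r + 1) / (INR (fact r) * b)) with (/ INR (fact r) * (INR (2 * r + 2) ^ (r + 1) / b))
    by (field; lra).
  assert (/ INR (fact r) * (INR (2 * r + 2) ^ (r + 1) / t) <= / INR (fact r) * (INR (2 * r + 2) ^ (r + 1) / b)).
  { apply Rmult_le_compat_l; [left; apply Rinv_0_lt_compat; lra|lra]. }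
  lra.
Qed.

Lemma pt_cell_low k r q : 0 <= q <= 1 -> (0 < k + r)%nat ->
  (INR k / INR (k + r)) ^ r * (1 - INR (k + r) * q ^ 2) * G0 r (INR (k + r) * q) / INR (fact r)
  <= binom_pmf (k + r) r q.
Proof.
  intros hq hn. eapply Rle_trans; [|apply binom_lower; auto].
  right. unfold G0. assert (0 < INR (k + r)) by (apply lt_0_INR; lia).
  rewrite !Rpow_mult_distr. unfold Rdiv. rewrite Rpow_mult_distr, pow_inv.
  field. split; [generalize (fact_pos r); lra| apply pow_nonzero; lra].
Qed.


Lemma cv_const c : Un_cv (fun _ => c) c.
Proof. intros e he. exists O. intros. unfold Rdist. rewrite Rminus_diag, Rabs_R0. lra. Qed.

Lemma cv_ext_ev (u v : nat -> R) l : (exists N, forall n, (n >= N)%nat -> u n = v n) ->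
  Un_cv u l -> Un_cv v l.
Proof.
  intros [N HN] Hu e he. destruct (Hu e he) as [N1 H1]. exists (Nat.max N N1).
  intros n hn. rewrite <- HN by lia. apply H1; lia.
Qed.

Lemma cv_div_n c : Un_cv (fun n => c / INR n) 0.
Proof.
  intros e he. destruct (INR_unbounded (Rabs c / e)) as [N HN].
  exists (S N). intros n hn. unfold Rdist. rewrite Rminus_0_r.
  assert (hN : INR N < INR n) by (apply lt_INR; lia).
  assert (0 <= INR N) by apply pos_INR.
  assert (hn0 : 0 < INR n) by lra.
  unfold Rdiv. rewrite Rabs_mult, Rabs_inv, (Rabs_right (INR n)) by lra.
  apply Rmult_lt_reg_r with (INR n); [lra|]. rewrite Rmult_assoc, Rinv_l by lra.
  assert (Rabs c / e * e = Rabs c) by (field; lra).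
  assert (Rabs c / e * e < INR n * e) by (apply Rmult_lt_compat_r; lra). nra.
Qed.

Lemma cv_pow u l k : Un_cv u l -> Un_cv (fun n => u n ^ k) (l ^ k).
Proof.
  intros H. induction k; simpl.
  - apply cv_const.
  - apply CV_mult; auto.
Qed.

Lemma cv_exp u l : Un_cv u l -> Un_cv (fun n => exp (u n)) (exp l).
Proof.
  intros H. apply continuity_seq; auto. apply derivable_continuous_pt, derivable_pt_exp.
Qed.

Lemma cv_ssum (F : nat -> nat -> R) (Lm : nat -> R) m :
  (forall i, (i < m)%nat -> Un_cv (F i) (Lm i)) ->
  Un_cv (fun n => ssum (fun i => F i n) m) (ssum Lm m).
Proof.
  induction m; intros H; simpl.
  - apply cv_const.
  - apply CV_plus; [apply IHm; intros; apply H; lia| apply H; lia].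
Qed.

Lemma cv_lt_ev u l K : Un_cv u l -> l < K -> exists N, forall n, (n >= N)%nat -> u n < K.
Proof.
  intros H hl. destruct (H (K - l) ltac:(lra)) as [N HN]. exists N. intros n hn.
  specialize (HN n hn). unfold Rdist in HN. apply Rabs_def2 in HN. lra.
Qed.

Lemma cv_gt_ev u l K : Un_cv u l -> K < l -> exists N, forall n, (n >= N)%nat -> K < u n.
Proof.
  intros H hl. destruct (H (l - K) ltac:(lra)) as [N HN]. exists N. intros n hn.
  specialize (HN n hn). unfold Rdist in HN. apply Rabs_def2 in HN. lra.
Qed.

Lemma lim_le_of_partial (f : nat -> R) Sm U M0 : infinite_sum f Sm ->
  (forall M, (M >= M0)%nat -> ssum f M <= U) -> Sm <= U.
Proof.
  intros HS HU. apply Rnot_lt_le. intro h.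
  destruct (HS (Sm - U) ltac:(lra)) as [N HN].
  specialize (HN (Nat.max N M0) ltac:(lia)). unfold Rdist in HN. apply Rabs_def2 in HN.
  rewrite sum_f_R0_ssum in HN. specialize (HU (S (Nat.max N M0)) ltac:(lia)). lra.
Qed.

Lemma partial_le_lim (f : nat -> R) Sm M : infinite_sum f Sm -> (forall j, 0 <= f j) ->
  ssum f M <= Sm.
Proof.
  intros HS Hf. destruct M; [simpl|].
  - assert (ssum f 1 <= Sm).
    { rewrite <- sum_f_R0_ssum. apply growing_ineq; auto.
      intro n. simpl. specialize (Hf (S n)). lra. }
    simpl in H. specialize (Hf O). lra.
  - rewrite <- sum_f_R0_ssum. apply growing_ineq; auto.
    intro n. simpl. specialize (Hf (S n)). lra.
Qed.

Lemma Ig_grid s a h m : 0 < a -> 0 < h ->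
  Ig s a (a + INR m * h) = ssum (fun i => Ig s (a + INR i * h) (a + INR i * h + h)) m.
Proof.
  intros ha hh. induction m; simpl ssum.
  - simpl INR. rewrite Rmult_0_l, Rplus_0_r. unfold Ig. rewrite RInt_point. reflexivity.
  - rewrite <- IHm. rewrite S_INR.
    assert (0 <= INR m * h) by (apply Rmult_le_pos; [apply pos_INR|lra]).
    rewrite Ig_chasles by lra. f_equal. ring.
Qed.


Lemma J_bounds r alpha a h m : 0 < a -> 0 < h -> 0 < alpha ->
  ssum (fun i => G0 r (a + INR i * h) * (Rpower (a + INR i * h) (- alpha) - Rpower (a + INR i * h + h) (- alpha))) m
    / (theta r a h * alpha)
  <= Ig (INR r - alpha) a (a + INR m * h) /\
  Ig (INR r - alpha) a (a + INR m * h) <=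
  theta r a h * ssum (fun i => G0 r (a + INR i * h) * (Rpower (a + INR i * h) (- alpha) - Rpower (a + INR i * h + h) (- alpha))) m / alpha.
Proof.
  intros ha hh hal. rewrite Ig_grid by auto.
  assert (0 < theta r a h) by (unfold theta; apply exp_pos).
  split.
  - unfold Rdiv. rewrite Rmult_comm, <- ssum_scal. apply ssum_le. intros i _.
    assert (0 <= INR i * h) by (apply Rmult_le_pos; [apply pos_INR|lra]).
    eapply Rle_trans; [|apply (cell_int_lower r alpha a h); lra]. right. field. repeat split; try lra; nra.
  - unfold Rdiv. rewrite Rmult_comm, <- Rmult_assoc, (Rmult_comm (/ alpha)), <- ssum_scal. apply ssum_le. intros i _.
    assert (0 <= INR i * h) by (apply Rmult_le_pos; [apply pos_INR|lra]).
    eapply Rle_trans; [apply (cell_int_upper r alpha a h); lra|]. right. field. repeat split; try lra; nra.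
Qed.

Lemma cnt_grid_eq p Mf (x : R) M y : MfOK p Mf -> 0 < x -> (M >= Mf x)%nat -> x <= y ->
  INR (cnt p y M) = nbf p Mf y.
Proof.
  intros HM hx hMx hxy. apply cnt_eq_nb; auto; try lra.
  intros j hj. assert (p j < x) by (apply HM; auto; lia). lra.
Qed.

Lemma upper_partial p Mf r a h m k x0 q M N b :
  MfOK p Mf -> (forall j, 0 <= p j <= 1) -> (1 <= r)%nat -> (r <= k)%nat -> 0 <= q < 2 ->
  (forall x, 0 < x <= x0 -> nbf p Mf (x / 2) <= q * nbf p Mf x) -> 0 < a -> 0 < h ->
  N = INR (k + r) -> b = a + INR m * h -> a / N <= x0 -> a / N <= 1 -> (M >= Mf (a / N)%R)%nat ->
  ssum (fun j => binom_pmf (k + r) r (p j)) M <=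
    2 * q / (2 - q) * a ^ r / INR (fact r) * nbf p Mf (a / N)
    + ssum (fun i => theta r a h * exp (b * INR r / N) * G0 r (a + INR i * h) / INR (fact r) *
         (nbf p Mf ((a + INR i * h) / N) - nbf p Mf ((a + INR (S i) * h) / N))) m
    + INR (2 * r + 2) ^ (r + 1) / (INR (fact r) * b) * nbf p Mf (b / N).
Proof.
  intros HM hp hr hrk hq Hpot ha hh hN hb hx0 hx1 hM.
  assert (hN0 : 0 < N) by (rewrite hN; apply lt_0_INR; lia).
  assert (hmh : 0 <= INR m * h) by (apply Rmult_le_pos; [apply pos_INR|lra]).
  assert (hba : a <= b) by lra.
  assert (hf := fact_pos r).
  set (x := fun i => (a + INR i * h) / N).
  assert (hxmono : forall i, x i <= x (S i)).
  { intros i. unfold x. rewrite S_INR. unfold Rdiv. apply Rmult_le_compat_r; [left; apply Rinv_0_lt_compat; lra|]. nra. }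
  assert (hx0e : x O = a / N) by (unfold x; simpl; f_equal; ring).
  assert (hxme : x m = b / N) by (unfold x; rewrite hb; reflexivity).
  assert (hxge : forall i, a / N <= x i).
  { intros i. rewrite <- hx0e. apply mono_grid; auto; lia. }
  set (E := exp (b * INR r / N)).
  set (Bi := fun i => theta r a h * E * G0 r (a + INR i * h) / INR (fact r)).
  set (Bb := INR (2 * r + 2) ^ (r + 1) / (INR (fact r) * b)).
  set (CN := N ^ r / INR (fact r)).
  assert (hth : 0 < theta r a h) by (unfold theta; apply exp_pos).
  assert (hE : 0 < E) by (unfold E; apply exp_pos).
  assert (pw : forall j, binom_pmf (k + r) r (p j) <=
     (1 - Ind (a / N) (p j)) * (CN * p j ^ r) + ssum (fun i => cI x i (p j) * Bi i) m + Ind (b / N) (p j) * Bb).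
  { intros j. specialize (hp j) as hpj. set (qq := p j) in *.
    assert (hbq : 0 <= binom_pmf (k + r) r qq) by (apply binom_nonneg; auto).
    destruct (Rlt_dec qq (a / N)) as [h1|h1].
    - rewrite cells_zero_below by (auto; lra).
      unfold Ind. destruct (Rle_dec (a / N) qq); [lra|]. destruct (Rle_dec (b / N) qq).
      { assert (a / N <= b / N) by (unfold Rdiv; apply Rmult_le_compat_r; [left; apply Rinv_0_lt_compat|]; lra). lra. }
      rewrite Rminus_0_r, Rmult_1_l, Rmult_0_l, !Rplus_0_r. unfold CN.
      rewrite hN. apply pt_low; auto.
    - destruct (Rlt_dec qq (b / N)) as [h2|h2].
      + unfold Ind at 1 2. destruct (Rle_dec (a / N) qq); [|lra]. destruct (Rle_dec (b / N) qq); [lra|].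
        rewrite Rminus_diag, Rmult_0_l, Rmult_0_l, Rplus_0_l, Rplus_0_r.
        apply (cells_upper x Bi (binom_pmf (k + r) r) (fun q => 0 <= q <= 1)); auto; [|lra].
        intros i hi q' hq' hc. unfold x in hc.
        set (t := N * q').
        assert (ht : a + INR i * h <= t < a + INR i * h + h).
        { destruct hc as [hc1 hc2]. unfold t. split.
          - apply Rmult_le_compat_l with (r := N) in hc1; [|lra].
            replace (N * ((a + INR i * h) / N)) with (a + INR i * h) in hc1 by (field; lra). lra.
          - apply Rmult_lt_compat_l with (r := N) in hc2; [|lra].
            replace (N * ((a + INR (S i) * h) / N)) with (a + INR i * h + h) in hc2 by (rewrite S_INR; field; lra). lra. }
        assert (hqb : q' <= b / N).
        { assert (hxs : x (S i) <= x m) by (apply mono_grid; [auto|lia]). rewrite hxme in hxs. unfold x in hxs, hc. lra. }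
        eapply Rle_trans; [apply pt_cell_up; auto|].
        rewrite <- hN. fold t.
        assert (0 <= INR i * h) by (apply Rmult_le_pos; [apply pos_INR|lra]).
        destruct (G0_cell r a h (a + INR i * h) t) as [_ hg]; try lra.
        assert (exp (q' * INR r) <= E).
        { unfold E. apply exp_le. replace (b * INR r / N) with (b / N * INR r) by (field; lra).
          apply Rmult_le_compat_r; [apply pos_INR|lra]. }
        assert (0 <= G0 r t) by (apply G0_nonneg; lra).
        unfold Bi. unfold Rdiv.
        assert (0 < / INR (fact r)) by (apply Rinv_0_lt_compat; lra).
        assert (0 < exp (q' * INR r)) by apply exp_pos.
        replace (theta r a h * E * G0 r (a + INR i * h) * / INR (fact r))
          with ((theta r a h * G0 r (a + INR i * h)) * / INR (fact r) * E) by ring.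
        apply Rmult_le_compat; try lra.
        * apply Rmult_le_pos; lra.
        * apply Rmult_le_compat_r; lra.
      + rewrite cells_zero_above by (auto; rewrite hxme; lra).
        unfold Ind. destruct (Rle_dec (a / N) qq); [|lra]. destruct (Rle_dec (b / N) qq); [|lra].
        rewrite Rminus_diag, Rmult_0_l, Rplus_0_l, Rplus_0_l, Rmult_1_l.
        unfold Bb. apply pt_high; [exact hpj| lia|]. split; [lra|].
        apply Rmult_le_compat_l with (r := N) in r1; [|lra].
        replace (N * (b / N)) with b in r1 by (field; lra). rewrite <- hN. lra. }
  eapply Rle_trans; [apply ssum_le; intros j _; apply pw|].
  rewrite !ssum_plus.
  assert (s1 : ssum (fun j => (1 - Ind (a / N) (p j)) * (CN * p j ^ r)) M = CN * Aq p r (a / N) M).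
  { unfold Aq. rewrite <- ssum_scal. apply ssum_ext. intros; ring. }
  assert (s2 : ssum (fun j => Ind (b / N) (p j) * Bb) M = Bb * INR (cnt p (b / N) M)).
  { rewrite cnt_INR, <- ssum_scal. apply ssum_ext. intros; ring. }
  rewrite s1, s2, cells_sum.
  assert (ha0 : 0 < a / N) by (apply Rdiv_lt_0_compat; lra).
  assert (hAq := A_bound p Mf r x0 q HM hp hr hq Hpot (a / N) ltac:(lra) hx1 M).
  assert (hCN : 0 <= CN) by (unfold CN; apply Rdiv_le_0_compat; [apply pow_le|]; lra).
  assert (e1 : CN * (2 * q / (2 - q) * (a / N) ^ r * nbf p Mf (a / N)) = 2 * q / (2 - q) * a ^ r / INR (fact r) * nbf p Mf (a / N)).
  { unfold CN. unfold Rdiv. rewrite Rpow_mult_distr, pow_inv. field. repeat split; try lra; apply pow_nonzero; lra. }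
  assert (CN * Aq p r (a / N) M <= 2 * q / (2 - q) * a ^ r / INR (fact r) * nbf p Mf (a / N)).
  { rewrite <- e1. apply Rmult_le_compat_l; auto. }
  assert (e2 : ssum (fun i => Bi i * (INR (cnt p (x i) M) - INR (cnt p (x (S i)) M))) m =
               ssum (fun i => theta r a h * exp (b * INR r / N) * G0 r (a + INR i * h) / INR (fact r) *
         (nbf p Mf ((a + INR i * h) / N) - nbf p Mf ((a + INR (S i) * h) / N))) m).
  { apply ssum_ext. intros i _. unfold Bi, E.
    rewrite (cnt_grid_eq p Mf (a / N) M (x i)); auto.
    rewrite (cnt_grid_eq p Mf (a / N) M (x (S i))); auto. }
  rewrite e2.
  rewrite (cnt_grid_eq p Mf (a / N) M (b / N)); auto; [|rewrite <- hxme; auto].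
  unfold Bb, E in *. lra.
Qed.

Lemma lower_partial p Mf r a h m k M N b :
  MfOK p Mf -> (forall j, 0 <= p j <= 1) -> (0 < k + r)%nat -> 0 < a -> 0 < h ->
  N = INR (k + r) -> b = a + INR m * h -> 0 <= 1 - b ^ 2 / N -> (M >= Mf (a / N)%R)%nat ->
  ssum (fun i => (INR k / N) ^ r * (1 - b ^ 2 / N) * G0 r (a + INR i * h) / (theta r a h * INR (fact r)) *
         (nbf p Mf ((a + INR i * h) / N) - nbf p Mf ((a + INR (S i) * h) / N))) m
  <= ssum (fun j => binom_pmf (k + r) r (p j)) M.
Proof.
  intros HM hp hkr ha hh hN hb hlam hM.
  assert (hN0 : 0 < N) by (rewrite hN; apply lt_0_INR; lia).
  assert (hmh : 0 <= INR m * h) by (apply Rmult_le_pos; [apply pos_INR|lra]).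
  assert (hf := fact_pos r).
  set (x := fun i => (a + INR i * h) / N).
  assert (hxmono : forall i, x i <= x (S i)).
  { intros i. unfold x. rewrite S_INR. unfold Rdiv. apply Rmult_le_compat_r; [left; apply Rinv_0_lt_compat; lra|]. nra. }
  assert (hx0e : x O = a / N) by (unfold x; simpl; f_equal; ring).
  assert (hxme : x m = b / N) by (unfold x; rewrite hb; reflexivity).
  assert (hxge : forall i, a / N <= x i).
  { intros i. rewrite <- hx0e. apply mono_grid; auto; lia. }
  assert (hth : 0 < theta r a h) by (unfold theta; apply exp_pos).
  set (lam := (INR k / N) ^ r * (1 - b ^ 2 / N)).
  assert (hkN : 0 <= (INR k / N) ^ r) by (apply pow_le; apply Rdiv_le_0_compat; [apply pos_INR|lra]).
  assert (hl0 : 0 <= lam) by (unfold lam; apply Rmult_le_pos; lra).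
  set (bi := fun i => lam * G0 r (a + INR i * h) / (theta r a h * INR (fact r))).
  assert (pw : forall j, ssum (fun i => cI x i (p j) * bi i) m <= binom_pmf (k + r) r (p j)).
  { intros j. specialize (hp j) as hpj. set (qq := p j) in *.
    assert (hbq : 0 <= binom_pmf (k + r) r qq) by (apply binom_nonneg; auto).
    destruct (Rlt_dec qq (x O)) as [h1|h1].
    - rewrite cells_zero_below by auto. lra.
    - destruct (Rlt_dec qq (x m)) as [h2|h2].
      + apply (cells_lower x bi (binom_pmf (k + r) r) (fun q => 0 <= q <= 1)); auto; [|lra].
        intros i hi q' hq' hc. unfold x in hc.
        set (t := N * q').
        assert (ht : a + INR i * h <= t < a + INR i * h + h).
        { destruct hc as [hc1 hc2]. unfold t. split.
          - apply Rmult_le_compat_l with (r := N) in hc1; [|lra].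
            replace (N * ((a + INR i * h) / N)) with (a + INR i * h) in hc1 by (field; lra). lra.
          - apply Rmult_lt_compat_l with (r := N) in hc2; [|lra].
            replace (N * ((a + INR (S i) * h) / N)) with (a + INR i * h + h) in hc2 by (rewrite S_INR; field; lra). lra. }
        assert (htb : t <= b).
        { assert (hxs : x (S i) <= x m) by (apply mono_grid; [auto|lia]). rewrite hxme in hxs.
          unfold x in hxs. rewrite S_INR in hxs.
          apply Rmult_le_compat_l with (r := N) in hxs; [|lra].
          replace (N * ((a + (INR i + 1) * h) / N)) with (a + INR i * h + h) in hxs by (field; lra).
          replace (N * (b / N)) with b in hxs by (field; lra). lra. }
        eapply Rle_trans; [|apply pt_cell_low; auto].
        rewrite <- hN. fold t.
        assert (0 <= INR i * h) by (apply Rmult_le_pos; [apply pos_INR|lra]).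
        destruct (G0_cell r a h (a + INR i * h) t) as [hg _]; try lra.
        assert (hq2 : 1 - b ^ 2 / N <= 1 - N * q' ^ 2).
        { assert (N * q' ^ 2 = t ^ 2 / N) by (unfold t; field; lra). rewrite H0.
          assert (0 <= t) by (assert (0 <= a + INR i * h) by lra; lra).
          assert (t ^ 2 <= b ^ 2) by (apply pow_incr; lra).
          unfold Rdiv. apply Rplus_le_compat_l, Ropp_le_contravar, Rmult_le_compat_r; [left; apply Rinv_0_lt_compat|]; lra. }
        assert (hG0 : 0 <= G0 r (a + INR i * h)) by (apply G0_nonneg; lra).
        assert (0 <= G0 r (a + INR i * h) / theta r a h) by (apply Rdiv_le_0_compat; lra).
        unfold bi, lam.
        replace ((INR k / N) ^ r * (1 - b ^ 2 / N) * G0 r (a + INR i * h) / (theta r a h * INR (fact r)))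
          with ((INR k / N) ^ r * ((1 - b ^ 2 / N) * (G0 r (a + INR i * h) / theta r a h)) / INR (fact r)) by (field; lra).
        replace ((INR k / N) ^ r * (1 - N * q' ^ 2) * G0 r t / INR (fact r))
          with ((INR k / N) ^ r * ((1 - N * q' ^ 2) * G0 r t) / INR (fact r)) by (field; lra).
        unfold Rdiv at 1 3. apply Rmult_le_compat_r; [left; apply Rinv_0_lt_compat; lra|].
        apply Rmult_le_compat_l; auto. apply Rmult_le_compat; lra.
      + rewrite cells_zero_above by (auto; lra). lra. }
  eapply Rle_trans; [|apply ssum_le; intros j _; apply pw].
  rewrite cells_sum. right. apply ssum_ext. intros i _. unfold bi, lam.
  rewrite (cnt_grid_eq p Mf (a / N) M (x i)); auto; [|apply Rdiv_lt_0_compat; lra].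
  rewrite (cnt_grid_eq p Mf (a / N) M (x (S i))); auto. all: apply Rdiv_lt_0_compat; lra.
Qed.


Lemma EK_exists (p : nat -> R) r : (forall j, 0 <= p j <= 1) -> (1 <= r)%nat ->
  (exists S, infinite_sum p S) ->
  forall n, {e | infinite_sum (fun j => binom_pmf n r (p j)) e}.
Proof.
  intros hp hr hsum n.
  destruct (constructive_indefinite_description _ hsum) as [S0 HS0].
  set (K := INR n ^ r / INR (fact r)).
  assert (hK : 0 <= K) by (unfold K; apply Rdiv_le_0_compat; [apply pow_le, pos_INR| apply fact_pos]).
  apply (Rseries_CV_comp _ (fun j => K * p j)).
  - intros j. split; [apply binom_nonneg; auto|].
    destruct (le_lt_dec r n) as [hrn|hrn].
    + replace n with ((n - r) + r)%nat by lia.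
      eapply Rle_trans; [apply pt_low; auto|]. replace (n - r + r)%nat with n by lia.
      apply Rmult_le_compat_l; auto. destruct r; [lia|]. simpl.
      specialize (hp j). assert (p j ^ r <= 1) by (apply pow_le1; lra). nra.
    + rewrite binom_small by auto. specialize (hp j). nra.
  - exists (K * S0). apply (cv_ext_ev (fun N => K * sum_f_R0 p N)).
    + exists O. intros N _. rewrite scal_sum. apply sum_eq. intros; ring.
    + apply CV_mult; auto. apply cv_const.
Qed.


Lemma choose_a alpha Q fr eps : 0 < alpha < 1 -> 0 <= Q -> 0 < fr -> 0 < eps ->
  exists a1, 0 < a1 /\ forall a, 0 < a <= a1 -> Q * Rpower a (1 - alpha) / fr < eps / 4.
Proof.
  intros ha hQ hf he.
  set (d := Rmin (1/2) (eps * fr / (4 * (Q + 1)))).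
  assert (hd : 0 < d) by (unfold d; apply Rmin_glb_lt; [lra| apply Rdiv_lt_0_compat; nra]).
  assert (hd2 : d <= eps * fr / (4 * (Q + 1))) by apply Rmin_r.
  exists (Rpower d (/ (1 - alpha))). split; [apply Rpower_pos|].
  intros a [ha0 ha1].
  assert (Rpower a (1 - alpha) <= d).
  { eapply Rle_trans; [apply Rle_Rpower_l; [lra| split; [exact ha0|exact ha1]]|].
    rewrite Rpower_mult. replace (/ (1 - alpha) * (1 - alpha)) with 1 by (field; lra).
    rewrite Rpower_1 by lra. lra. }
  assert (0 <= Rpower a (1 - alpha)) by (left; apply Rpower_pos).
  apply Rmult_lt_reg_r with fr; auto. unfold Rdiv. rewrite Rmult_assoc, Rinv_l by lra.
  assert (Q * Rpower a (1 - alpha) <= Q * d) by (apply Rmult_le_compat_l; lra).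
  assert (Q * d <= Q * (eps * fr / (4 * (Q + 1)))) by (apply Rmult_le_compat_l; lra).
  assert (Q * (eps * fr / (4 * (Q + 1))) < eps * / 4 * fr).
  { replace (eps * / 4 * fr) with ((Q + 1) * (eps * fr / (4 * (Q + 1)))) by (field; lra).
    apply Rmult_lt_compat_r; [apply Rdiv_lt_0_compat; nra| lra]. }
  lra.
Qed.

Lemma choose_m b a r w : 0 < a -> a < b -> 0 < w ->
  exists m, (1 <= m)%nat /\ (b - a) / INR m * (INR r / a + 1) * 2 <= ln (1 + w).
Proof.
  intros ha hab hw.
  assert (hl : 0 < ln (1 + w)) by (rewrite <- ln_1; apply ln_increasing; lra).
  assert (hK : 0 < (b - a) * (INR r / a + 1) * 2).
  { assert (0 <= INR r / a) by (apply Rdiv_le_0_compat; [apply pos_INR|lra]). nra. }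
  destruct (INR_unbounded ((b - a) * (INR r / a + 1) * 2 / ln (1 + w))) as [m Hm].
  assert (hm0 : 0 < INR m) by (assert (0 < (b - a) * (INR r / a + 1) * 2 / ln (1 + w)) by (apply Rdiv_lt_0_compat; lra); lra).
  exists m. split; [destruct m; [simpl in hm0; lra| lia]|].
  replace ((b - a) / INR m * (INR r / a + 1) * 2) with ((b - a) * (INR r / a + 1) * 2 / INR m) by (field; lra).
  apply Rmult_le_reg_r with (INR m); auto. unfold Rdiv. rewrite Rmult_assoc, Rinv_l by lra.
  apply Rmult_lt_compat_r with (r := ln (1 + w)) in Hm; auto.
  unfold Rdiv in Hm. rewrite Rmult_assoc, Rinv_l in Hm by lra. lra.
Qed.

Lemma main_cv p alpha l r G EK :
  (forall j, 0 <= p j <= 1) -> (exists S, infinite_sum p S) -> 0 < alpha < 1 ->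
  regularly_varying p alpha l -> (1 <= r)%nat -> 0 < G ->
  (forall a b, 0 < a <= b -> Ig (INR r - alpha) a b <= G) ->
  (forall del, 0 < del -> exists a0 b0, 0 < a0 <= b0 /\ G - del < Ig (INR r - alpha) a0 b0) ->
  (forall n, infinite_sum (fun j => binom_pmf n r (p j)) (EK n)) ->
  Un_cv (fun n => EK n / Lf l alpha (INR n)) (alpha * G / INR (fact r)).
Proof.
  intros hp hsum hal hrv hr hG Gup Gapp HEK.
  destruct (Mf_exists p hsum) as [Mf HMf]. assert (HM : MfOK p Mf) by exact HMf.
  destruct (potter p Mf alpha l HM hrv hal) as [x0 [q [hx0 [hq Hpot]]]].
  destruct (lpos p Mf alpha l HM hrv) as [T0 [hT0 HT0]].
  set (fr := INR (fact r)). assert (hfr : 0 < fr) by apply fact_pos.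
  set (c := alpha * G / fr).
  assert (hc : 0 < c) by (unfold c; apply Rdiv_lt_0_compat; nra).
  set (s := INR r - alpha).
  assert (hrR : 1 <= INR r) by (change 1 with (INR 1); apply le_INR; auto).
  set (Q := 2 * q / (2 - q)). assert (hQ : 0 <= Q) by (unfold Q; apply Rdiv_le_0_compat; lra).
  intros eps heps.
  destruct (Gapp (eps * fr / (4 * alpha))) as [a0 [b0 [hab0 hI0]]]; [apply Rdiv_lt_0_compat; nra|]. fold s in hI0.
  destruct (choose_a alpha Q fr eps hal hQ hfr heps) as [a1 [ha1 Ha1]].
  set (a := Rmin a0 (Rmin a1 1)).
  assert (ha : 0 < a) by (unfold a; repeat apply Rmin_glb_lt; lra).
  assert (haa0 : a <= a0) by apply Rmin_l.
  assert (haa1 : a <= a1) by (unfold a; eapply Rle_trans; [apply Rmin_r| apply Rmin_l]).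
  assert (ha1' : a <= 1) by (unfold a; eapply Rle_trans; [apply Rmin_r| apply Rmin_r]).
  set (Kb := INR (2 * r + 2) ^ (r + 1)).
  assert (hKb : 0 <= Kb) by (apply pow_le, pos_INR).
  set (b := Rmax (Rmax b0 (a + 1)) (4 * Kb / (fr * eps) + 1)).
  assert (hbb0 : b0 <= b) by (unfold b; eapply Rle_trans; [apply Rmax_l| apply Rmax_l]).
  assert (hba : a + 1 <= b) by (unfold b; eapply Rle_trans; [apply Rmax_r| apply Rmax_l]).
  assert (hbK : 4 * Kb / (fr * eps) + 1 <= b) by (unfold b; apply Rmax_r).
  set (J := alpha / fr * Ig s a b).
  assert (hIab1 : Ig s a0 b0 <= Ig s a b) by (apply Ig_mono; lra).
  assert (hIab2 : Ig s a b <= G) by (apply Gup; lra).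
  assert (hIab0 : 0 <= Ig s a b) by (apply Ig_nonneg; lra).
  assert (hJ1 : J <= c).
  { unfold J, c. replace (alpha * G / fr) with (alpha / fr * G) by (field; lra).
    apply Rmult_le_compat_l; [apply Rdiv_le_0_compat; lra| lra]. }
  assert (hJ2 : c - eps / 4 < J).
  { unfold J, c.
    assert (alpha / fr * (G - eps * fr / (4 * alpha)) < alpha / fr * Ig s a b).
    { apply Rmult_lt_compat_l; [apply Rdiv_lt_0_compat; lra| lra]. }
    replace (alpha / fr * (G - eps * fr / (4 * alpha))) with (alpha * G / fr - eps / 4) in H by (field; lra).
    lra. }
  assert (hJ0 : 0 <= J) by (unfold J; apply Rmult_le_pos; [apply Rdiv_le_0_compat; lra| lra]).
  set (w := eps / (4 * (c + 1))).
  assert (hw : 0 < w) by (unfold w; apply Rdiv_lt_0_compat; lra).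
  destruct (choose_m b a r w ha ltac:(lra) hw) as [m [hm Hm]].
  assert (hm0 : 0 < INR m) by (apply lt_0_INR; lia).
  set (h := (b - a) / INR m).
  assert (hh : 0 < h) by (unfold h; apply Rdiv_lt_0_compat; lra).
  set (th := theta r a h).
  assert (hth1 : 1 <= th) by (apply theta_ge1; lra).
  assert (hth2 : th * th <= 1 + w).
  { unfold th, theta. rewrite <- exp_plus. rewrite <- (exp_ln (1 + w)) by lra. apply exp_le.
    unfold h. lra. }
  assert (hbm : b = a + INR m * h) by (unfold h; field; lra).
  set (u := fun i => a + INR i * h).
  assert (hu : forall i, 0 < u i) by (intros i; unfold u; assert (0 <= INR i * h) by (apply Rmult_le_pos; [apply pos_INR|lra]); lra).
  set (Rs := ssum (fun i => G0 r (u i) * (Rpower (u i) (- alpha) - Rpower (u (S i)) (- alpha))) m).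
  destruct (J_bounds r alpha a h m ha hh (proj1 hal)) as [hJB1 hJB2].
  assert (eRs : ssum (fun i => G0 r (a + INR i * h) * (Rpower (a + INR i * h) (- alpha) - Rpower (a + INR i * h + h) (- alpha))) m = Rs).
  { apply ssum_ext. intros i _. unfold u. rewrite S_INR. do 3 f_equal. ring. }
  rewrite eRs, <- hbm in hJB1, hJB2. fold s in hJB1, hJB2. fold th in hJB1, hJB2.
  set (R := Rs / fr).
  assert (hJR1 : R / th <= J).
  { unfold J, R. apply Rmult_le_compat_l with (r := alpha / fr) in hJB1; [|apply Rdiv_le_0_compat; lra].
    replace (alpha / fr * (Rs / (th * alpha))) with (Rs / fr / th) in hJB1 by (field; repeat split; lra). lra. }
  assert (hJR2 : J <= th * R).
  { unfold J, R. apply Rmult_le_compat_l with (r := alpha / fr) in hJB2; [|apply Rdiv_le_0_compat; lra].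
    replace (alpha / fr * (th * Rs / alpha)) with (th * (Rs / fr)) in hJB2 by (field; repeat split; lra). lra. }
  set (rho := fun t n => nbf p Mf (t / INR n) / Lf l alpha (INR n)).
  assert (cvrho : forall t, 0 < t -> Un_cv (rho t) (Rpower t (- alpha))).
  { intros t ht. apply nbcv; auto. }
  set (Gs := fun n => ssum (fun i => G0 r (u i) / fr * (rho (u i) n - rho (u (S i)) n)) m).
  assert (cvGs : Un_cv Gs R).
  { unfold R, Rs. unfold Rdiv. rewrite Rmult_comm, <- ssum_scal. unfold Gs.
    apply cv_ssum. intros i _.
    replace (/ fr * (G0 r (u i) * (Rpower (u i) (- alpha) - Rpower (u (S i)) (- alpha))))
      with (G0 r (u i) * / fr * (Rpower (u i) (- alpha) - Rpower (u (S i)) (- alpha))) by ring.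
    apply CV_mult; [apply cv_const|]. apply CV_minus; apply cvrho; auto. }
  set (Un := fun n => Q * a ^ r / fr * rho a n + th * exp (b * INR r / INR n) * Gs n + Kb / (fr * b) * rho b n).
  set (Ln := fun n => (1 - INR r / INR n) ^ r * (1 - b ^ 2 / INR n) * / th * Gs n).
  set (Uinf := Q * a ^ r / fr * Rpower a (- alpha) + th * exp 0 * R + Kb / (fr * b) * Rpower b (- alpha)).
  set (Linf := (1 - 0) ^ r * (1 - 0) * / th * R).
  assert (cvU : Un_cv Un Uinf).
  { unfold Un, Uinf. apply CV_plus; [apply CV_plus|].
    - apply CV_mult; [apply cv_const| apply cvrho; lra].
    - apply CV_mult; auto. apply CV_mult; [apply cv_const|]. apply cv_exp, cv_div_n.
    - apply CV_mult; [apply cv_const| apply cvrho; lra]. }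
  assert (cvL : Un_cv Ln Linf).
  { unfold Ln, Linf. apply CV_mult; auto. apply CV_mult; [|apply cv_const].
    apply CV_mult. apply cv_pow. apply CV_minus; [apply cv_const| apply cv_div_n].
    apply CV_minus; [apply cv_const| apply cv_div_n]. }
  assert (hUinf : Uinf < c + eps).
  { unfold Uinf. rewrite exp_0, Rmult_1_r.
    assert (t1 : Q * a ^ r / fr * Rpower a (- alpha) < eps / 4).
    { assert (a ^ r <= a).
      { destruct r; [lia|]. simpl. assert (a ^ r <= 1) by (apply pow_le1; lra). nra. }
      assert (Rpower a (1 - alpha) = a * Rpower a (- alpha)).
      { replace (1 - alpha) with (1 + - alpha) by ring. rewrite Rpower_plus, Rpower_1 by lra. reflexivity. }
      assert (Q * a ^ r / fr * Rpower a (- alpha) <= Q * Rpower a (1 - alpha) / fr).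
      { rewrite H0. assert (0 < Rpower a (- alpha)) by apply Rpower_pos.
        unfold Rdiv. replace (Q * a ^ r * / fr * Rpower a (- alpha)) with (Q * / fr * Rpower a (- alpha) * a ^ r) by ring.
        replace (Q * (a * Rpower a (- alpha)) * / fr) with (Q * / fr * Rpower a (- alpha) * a) by ring.
        apply Rmult_le_compat_l; auto. apply Rmult_le_pos; [apply Rmult_le_pos|]; try lra.
        left; apply Rinv_0_lt_compat; lra. }
      assert (Q * Rpower a (1 - alpha) / fr < eps / 4) by (apply Ha1; lra). lra. }
    assert (t3 : Kb / (fr * b) * Rpower b (- alpha) < eps / 4).
    { assert (Rpower b (- alpha) <= 1).
      { rewrite <- (Rpower_O b) by lra. apply Rle_Rpower; lra. }
      assert (0 < Rpower b (- alpha)) by apply Rpower_pos.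
      assert (0 <= Kb / (fr * b)) by (apply Rdiv_le_0_compat; [lra| apply Rmult_lt_0_compat; lra]).
      assert (Kb / (fr * b) < eps / 4).
      { apply Rmult_lt_reg_r with (fr * b); [apply Rmult_lt_0_compat; lra|].
        unfold Rdiv at 1. rewrite Rmult_assoc, Rinv_l by (apply Rgt_not_eq, Rmult_lt_0_compat; lra).
        assert (hb4 : 4 * Kb / (fr * eps) < b) by lra.
        apply Rmult_lt_compat_r with (r := fr * eps / 4) in hb4; [|apply Rdiv_lt_0_compat; nra].
        replace (4 * Kb / (fr * eps) * (fr * eps / 4)) with Kb in hb4 by (field; lra). nra. }
      nra. }
    assert (t2 : th * R <= c + eps / 4).
    { assert (th * R <= th * (th * J)).
      { apply Rmult_le_compat_l; [lra|]. apply Rmult_le_reg_r with (/ th); [apply Rinv_0_lt_compat; lra|].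
        replace (th * J * / th) with J by (field; lra). unfold Rdiv in hJR1. lra. }
      assert (th * (th * J) <= (1 + w) * J) by (rewrite <- Rmult_assoc; apply Rmult_le_compat_r; lra).
      assert ((1 + w) * J <= (1 + w) * c) by (apply Rmult_le_compat_l; lra).
      assert (w * c <= eps / 4).
      { unfold w. apply Rmult_le_reg_r with (4 * (c + 1)); [lra|].
        replace (eps / (4 * (c + 1)) * c * (4 * (c + 1))) with (eps * c) by (field; lra). nra. }
      lra. }
    lra. }
  assert (hLinf : c - eps < Linf).
  { unfold Linf. rewrite Rminus_0_r, pow1, !Rmult_1_l.
    assert (J / th <= R) by (apply Rmult_le_reg_r with th; [lra|]; unfold Rdiv; rewrite Rmult_assoc, Rinv_l by lra; lra).
    assert (J / (th * th) <= / th * R).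
    { replace (J / (th * th)) with (/ th * (J / th)) by (field; lra). apply Rmult_le_compat_l; [left; apply Rinv_0_lt_compat; lra| lra]. }
    assert (J / (1 + w) <= J / (th * th)).
    { unfold Rdiv. apply Rmult_le_compat_l; auto. apply Rinv_le_contravar; nra. }
    assert (c - eps < J / (1 + w)).
    { apply Rmult_lt_reg_r with (1 + w); [lra|]. unfold Rdiv. rewrite Rmult_assoc, Rinv_l by lra.
      assert (w * c <= eps / 4).
      { unfold w. apply Rmult_le_reg_r with (4 * (c + 1)); [lra|].
        replace (eps / (4 * (c + 1)) * c * (4 * (c + 1))) with (eps * c) by (field; lra). nra. }
      assert (w * eps > 0) by nra. nra. }
    lra. }
  destruct (cv_lt_ev Un Uinf (c + eps) cvU hUinf) as [N2 HN2].
  destruct (cv_gt_ev Ln Linf (c - eps) cvL hLinf) as [N3 HN3].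
  destruct (eventually_big (Rmax (Rmax (2 * INR r) T0) (Rmax (a / x0) (Rmax (b ^ 2) 1)))) as [N1 HN1].
  exists (Nat.max N1 (Nat.max N2 N3)). intros n hn.
  specialize (HN1 n ltac:(lia)). specialize (HN2 n ltac:(lia)). specialize (HN3 n ltac:(lia)).
  assert (hn2r : 2 * INR r < INR n).
  { eapply Rle_lt_trans; [|exact HN1]. eapply Rle_trans; [apply Rmax_l| apply Rmax_l]. }
  assert (hnT : T0 < INR n).
  { eapply Rle_lt_trans; [|exact HN1]. eapply Rle_trans; [apply Rmax_r| apply Rmax_l]. }
  assert (hnx : a / x0 < INR n).
  { eapply Rle_lt_trans; [|exact HN1]. eapply Rle_trans; [apply Rmax_l| apply Rmax_r]. }
  assert (hnb : b ^ 2 < INR n).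
  { eapply Rle_lt_trans; [|exact HN1]. eapply Rle_trans; [|apply Rmax_r]. eapply Rle_trans; [apply Rmax_l| apply Rmax_r]. }
  assert (hn1 : 1 < INR n).
  { eapply Rle_lt_trans; [|exact HN1]. eapply Rle_trans; [|apply Rmax_r]. eapply Rle_trans; [apply Rmax_r| apply Rmax_r]. }
  assert (hrn : (2 * r < n)%nat).
  { apply INR_lt. rewrite mult_INR. simpl. lra. }
  set (k := (n - r)%nat). assert (hnk : n = (k + r)%nat) by (unfold k; lia).
  assert (hN : INR n = INR (k + r)) by (rewrite <- hnk; reflexivity).
  assert (hrk : (r <= k)%nat) by (unfold k; lia).
  assert (hL : 0 < Lf l alpha (INR n)) by (unfold Lf; apply Rmult_lt_0_compat; [apply Rpower_pos| apply HT0; lra]).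
  assert (hax : a / INR n <= x0).
  { apply Rmult_le_reg_r with (INR n); [lra|]. unfold Rdiv. rewrite Rmult_assoc, Rinv_l by lra.
    apply Rmult_lt_compat_r with (r := x0) in hnx; auto. unfold Rdiv in hnx.
    rewrite Rmult_assoc, Rinv_l in hnx by lra. lra. }
  assert (ha1N : a / INR n <= 1).
  { apply Rmult_le_reg_r with (INR n); [lra|]. unfold Rdiv. rewrite Rmult_assoc, Rinv_l by lra. lra. }
  assert (hlam : 0 <= 1 - b ^ 2 / INR n).
  { assert (b ^ 2 / INR n <= 1).
    { apply Rmult_le_reg_r with (INR n); [lra|]. unfold Rdiv. rewrite Rmult_assoc, Rinv_l by lra. lra. }
    lra. }
  assert (EKup : EK n <= Lf l alpha (INR n) * Un n).
  { apply (lim_le_of_partial _ _ _ (Mf (a / INR n)) (HEK n)). intros M hM.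
    replace (ssum (fun j => binom_pmf n r (p j)) M) with (ssum (fun j => binom_pmf (k + r) r (p j)) M) by (rewrite <- hnk; reflexivity).
    eapply Rle_trans; [apply (upper_partial p Mf r a h m k x0 q M (INR n) b); auto|].
    right. unfold Un, Gs, rho, Q, fr, Kb, th, u.
    rewrite !Rmult_plus_distr_l.
    assert (eS : ssum (fun i => theta r a h * exp (b * INR r / INR n) * G0 r (a + INR i * h) / INR (fact r) *
       (nbf p Mf ((a + INR i * h) / INR n) - nbf p Mf ((a + INR (S i) * h) / INR n))) m =
       Lf l alpha (INR n) * (theta r a h * exp (b * INR r / INR n) *
       ssum (fun i => G0 r (a + INR i * h) / INR (fact r) *
         (nbf p Mf ((a + INR i * h) / INR n) / Lf l alpha (INR n) -
          nbf p Mf ((a + INR (S i) * h) / INR n) / Lf l alpha (INR n))) m)).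
    { rewrite <- !ssum_scal. apply ssum_ext. intros i _. field. split; [lra| apply INR_fact_neq_0]. }
    rewrite eS. field. repeat split; try lra. apply INR_fact_neq_0. }
  assert (EKlow : Lf l alpha (INR n) * Ln n <= EK n).
  { eapply Rle_trans; [|apply (partial_le_lim _ _ (Mf (a / INR n)) (HEK n)); intros j; apply binom_nonneg; auto].
    replace (ssum (fun j => binom_pmf n r (p j)) (Mf (a / INR n))) with (ssum (fun j => binom_pmf (k + r) r (p j)) (Mf (a / INR n))) by (rewrite <- hnk; reflexivity).
    eapply Rle_trans; [|apply (lower_partial p Mf r a h m k (Mf (a / INR n)) (INR n) b); auto; lia].
    right. unfold Ln, Gs, rho, th, u, fr.
    assert (ek : INR k / INR n = 1 - INR r / INR n).
    { rewrite hN, plus_INR. field. rewrite <- plus_INR, <- hN. lra. }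
    rewrite ek. rewrite <- !ssum_scal. apply ssum_ext. intros i _. field.
    assert (0 < theta r a h) by (unfold theta; apply exp_pos). repeat split; try lra. apply INR_fact_neq_0. }
  unfold Rdist. apply Rabs_def1.
  - assert (EK n / Lf l alpha (INR n) <= Un n).
    { apply Rmult_le_reg_r with (Lf l alpha (INR n)); auto. unfold Rdiv. rewrite Rmult_assoc, Rinv_l by lra. lra. }
    lra.
  - assert (Ln n <= EK n / Lf l alpha (INR n)).
    { apply Rmult_le_reg_r with (Lf l alpha (INR n)); auto. unfold Rdiv. rewrite Rmult_assoc, Rinv_l by lra. lra. }
    lra.
Qed.


Theorem theorem2 (p : nat -> R) (alpha : R) (l : R -> R) (r : nat)
  (hp : forall j, 0 <= p j <= 1)
  (hsum : exists S, infinite_sum p S)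
  (halpha : 0 < alpha < 1)
  (hrv : regularly_varying p alpha l)
  (hr : (1 <= r)%nat) :
  exists G, is_Gamma (INR r - alpha) G /\
  exists EK : nat -> R,
    (forall n, infinite_sum (fun j => binom_pmf n r (p j)) (EK n)) /\
    Un_cv (fun n => EK n /
             (alpha * G / INR (fact r) * Rpower (INR n) alpha * l (INR n))) 1.
Proof.
  assert (hrR : 1 <= INR r) by (change 1 with (INR 1); apply le_INR; auto).
  destruct (Gamma_exists (INR r - alpha) r) as [G [HG [hG [Gup Gapp]]]]; [lra|lra|].
  exists G. split; [exact HG|].
  pose (HEK := EK_exists p r hp hr hsum).
  exists (fun n => proj1_sig (HEK n)). split; [intros n; exact (proj2_sig (HEK n))|].
  assert (cv := main_cv p alpha l r G (fun n => proj1_sig (HEK n)) hp hsum halpha hrv hr hG Gup Gapp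
                  (fun n => proj2_sig (HEK n))).
  destruct (Mf_exists p hsum) as [Mf HMf].
  destruct (lpos p Mf alpha l HMf hrv) as [T0 [hT0 HT0]].
  assert (hf := fact_pos r).
  set (c := alpha * G / INR (fact r)) in *.
  assert (hc : 0 < c) by (unfold c; apply Rdiv_lt_0_compat; nra).
  apply (cv_ext_ev (fun n => proj1_sig (HEK n) / Lf l alpha (INR n) * / c)).
  - destruct (eventually_big T0) as [N HN]. exists N. intros n hn. specialize (HN n hn).
    unfold Lf. assert (0 < l (INR n)) by (apply HT0; lra).
    assert (0 < Rpower (INR n) alpha) by apply Rpower_pos.
    field. repeat split; lra.
  - replace 1 with (c * / c) by (field; lra). apply CV_mult; auto. apply cv_const.
Qed.
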